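(* Let $F$ be a field of characteristic $p>0$, let $S\subset F$ be nonempty with $\mathrm{pdeg}(S)=k$ finite, and let $\{a_1,\ldots,a_k\}$ be a $p$-basis of $F^p(S)$. For $r\in\{1,\ldots,k\}$ put $t=k-r+1$. Then $$\operatorname{ann}\Omega^n_F\Big(\textstyle\bigwedge^r\mathrm{d} S\Big)=\sum_{\substack{\{i_1,\ldots,i_t\}\subset\{1,\ldots,k\}\\ i_1<\cdots<i_t}}\mathrm{d} a_{i_1}\wedge\cdots\wedge\mathrm{d} a_{i_t}\wedge\Omega^{n-t}(F),$$ and for $r>k$ we have $\operatorname{ann}\Omega^n_F(\bigwedge^r\mathrm{d} S)=\Omega^n(F)$.
   Context: $F$ is a field of characteristic $p>0$. $\Omega^1(F)$ is the $F$-vector space generated by symbols $\mathrm{d} a$ ($a\in F$) with $\mathrm{d}(a+b)=\mathrm{d} a+\mathrm{d} b$, $\mathrm{d}(ab)=a\,\mathrm{d} b+b\,\mathrm{d} a$; $\Omega^n(F)=\bigwedge^n_F\Omega^1(F)$ for $n\geq1$, $\Omega^0(F)=F$, $\Omega^n(F)=0$ for $n<0$. A subset $A\subset F$ is $p$-independent if $[F^p(a_1,\ldots,a_m):F^p]=p^m$ for all finite $\{a_1,\ldots,a_m\}\subset A$; for $C\subset F$, $\mathrm{pdeg}(C)=\log_p[F^p(C):F^p]$; a $p$-basis of a field $L$ with $F^p\subseteq L\subseteq F$ is a $p$-independent $A\subset L$ with $F^p(A)=L$. For nonempty $S\subset F$, $\bigwedge^r\mathrm{d} S=\{\mathrm{d}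 s_1\wedge\cdots\wedge\mathrm{d} s_r\mid s_i\in S\}\subset\Omega^r(F)$. For nonempty $U\subset\Omega^r(F)$, $\operatorname{ann}\Omega^n_F(U)=\{\omega\in\Omega^n(F)\mid\omega\wedge u=0\text{ for all }u\in U\}$. *)

(* Defs.v *)
From HB Require Import structures.
From mathcomp Require Import all_boot all_order all_algebra.
From mathcomp Require Import freeg.
Set Implicit Arguments. Unset Strict Implicit. Unset Printing Implicit Defensive.
Import Order.TTheory GRing.Theory Num.Theory.
Local Open Scope ring_scope.

Section Omega.
Variable F : fieldType.

(** Formal F-linear combinations of symbols  dx_1 /\ ... /\ dx_m  (one symbol
    for every finite sequence [x_1;...;x_m] of elements of F, all degrees
    together). *)
Definition Form := {freeg (seq F) / F}.

Definition dw (s : seq F) : Form := << s >>.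

(** Defining relations of the graded exterior algebra  /\^* Omega^1(F):
    additivity and Leibniz rule of d in each slot, and alternation. *)
Inductive Gen : Form -> Prop :=
| gen_add (xs : seq F) (i : nat) (a b : F) : (i < size xs)%N ->
    Gen (dw (set_nth 0 xs i (a + b)) - dw (set_nth 0 xs i a)
         - dw (set_nth 0 xs i b))
| gen_leib (xs : seq F) (i : nat) (a b : F) : (i < size xs)%N ->
    Gen (dw (set_nth 0 xs i (a * b)) - a *: dw (set_nth 0 xs i b)
         - b *: dw (set_nth 0 xs i a))
| gen_alt (xs : seq F) (i j : nat) : (i < j)%N -> (j < size xs)%N ->
    nth 0 xs i = nth 0 xs j -> Gen (dw xs).

(** the F-submodule generated by the relations: [Zero w] means that the
    class of w in /\^* Omega^1(F) is 0. *)
Inductive Zero : Form -> Prop :=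
| zero_gen w : Gen w -> Zero w
| zero_0 : Zero 0
| zero_add w w' : Zero w -> Zero w' -> Zero (w + w')
| zero_scale (c : F) w : Zero w -> Zero (c *: w).

(** w represents an element of Omega^n(F) (n : nat) *)
Definition homog (n : nat) (w : Form) : Prop :=
  forall s, s \in dom w -> size s = n.

Definition OmegaZ (m : int) (w : Form) : Prop :=
  match m with
  | Posz n => homog n w
  | Negz _ => w = 0
  end.

Definition wedge (w v : Form) : Form :=
  fglift (fun s => fglift (fun t => dw (s ++ t)) v) w.

(** ann_{Omega^n}(/\^r dS) membership of (the class of) w, for w of degree n *)
Definition annihilates (S : F -> Prop) (r : nat) (w : Form) : Prop :=
  forall s : seq F, size s = r -> (forall x, x \in s -> S x) ->
    Zero (wedge w (dw s)).

Variable p : nat.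

Definition Fp (x : F) : Prop := exists y, x = y ^+ p.

Definition subfield_closed (L : F -> Prop) : Prop :=
  [/\ L 0, L 1, (forall x y, L x -> L y -> L (x + y)),
      (forall x, L x -> L (- x)) &
      (forall x y, L x -> L y -> L (x * y)) /\ (forall x, L x -> L (x^-1))].

Definition adjoin (C : F -> Prop) (x : F) : Prop :=
  forall L : F -> Prop, subfield_closed L -> (forall y, Fp y -> L y) ->
    (forall c, C c -> L c) -> L x.

Definition ext_degree (K L : F -> Prop) (d : nat) : Prop :=
  exists b : seq F, [/\ size b = d, (forall x, x \in b -> L x),
    (forall c : seq F, size c = size b -> (forall x, x \in c -> K x) ->
       \sum_(i < size b) c`_i * b`_i = 0 -> forall i, c`_i = 0)
  & (forall x, L x -> exists c : seq F, [/\ size c = size b,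
        (forall y, y \in c -> K y) & x = \sum_(i < size b) c`_i * b`_i])].

Definition pdeg_eq (C : F -> Prop) (k : nat) : Prop :=
  ext_degree Fp (adjoin C) (p ^ k).

Definition p_independent (A : F -> Prop) : Prop :=
  forall s : seq F, uniq s -> (forall x, x \in s -> A x) ->
    ext_degree Fp (adjoin (fun x => x \in s)) (p ^ size s).

Definition p_basis (L A : F -> Prop) : Prop :=
  [/\ (forall x, A x -> L x), p_independent A
    & (forall x, adjoin A x <-> L x)].

End Omega.

(* Main.v *)
Require Import Defs.
From HB Require Import structures.
From mathcomp Require Import all_boot all_order all_algebra.
From mathcomp Require Import freeg.
From mathcomp Require Import ring zify.
From mathcomp Require classical_sets.
From Stdlib Require Import IndefiniteDescription Classical FunctionalExtensionality PropExtensionality.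
Import Order.TTheory GRing.Theory Num.Theory.
Local Open Scope ring_scope.

Section FormAlg.
Set Implicit Arguments. Unset Strict Implicit. Unset Printing Implicit Defensive.
Variable F : fieldType.
Local Notation form := (Form F).
Implicit Types (w v u : form) (s t : seq F).

HB.instance Definition _ (M : lmodType F) (f : seq F -> M) :=
  GRing.isAdditive.Build form M (fglift f) (lift_is_additive f).

Lemma dwZ c s : << c *g s >> = c *: dw s.
Proof. by apply/eqP/freeg_eqP => z; rewrite coeffZ !coeffU mul1r. Qed.

Lemma fgliftE (M : lmodType F) (f : seq F -> M) w :
  fglift f w = \sum_(z <- dom w) coeff z w *: f z.
Proof.
have e := congr1 (fglift f) (freeg_sumE w).
rewrite -{}e raddf_sum; apply: eq_bigr => z _.
exact: liftU.
Qed.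

Lemma fglift_gen (M : lmodType F) (f : seq F -> M) w r :
  uniq r -> {subset dom w <= r} -> fglift f w = \sum_(z <- r) coeff z w *: f z.
Proof.
move=> ur sub; rewrite fgliftE [RHS](bigID (fun z => z \in dom w)) /=.
rewrite [X in _ = _ + X]big1 ?addr0; last first.
  by move=> z /coeff_outdom ->; rewrite scale0r.
rewrite -[RHS]big_filter.

apply: perm_big; apply: uniq_perm.
- exact: uniq_dom.
- exact: filter_uniq.
by move=> z; rewrite mem_filter; apply/idP/idP => [h|/andP[]//]; rewrite h sub.
Qed.

Lemma fgliftZ (M : lmodType F) (f : seq F -> M) c w :
  fglift f (c *: w) = c *: fglift f w.
Proof.
rewrite (@fglift_gen _ f (c *: w) (dom w)) ?uniq_dom //; last exact: domZ_subset.
rewrite fgliftE scaler_sumr; apply: eq_bigr => z _.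
by rewrite coeffZ scalerA.
Qed.

Lemma fglift_dw (M : lmodType F) (f : seq F -> M) s : fglift f (dw s) = f s.
Proof. by rewrite /dw liftU scale1r. Qed.

Lemma formE w : w = \sum_(z <- dom w) coeff z w *: dw z.
Proof.
by rewrite -{1}(freeg_sumE w); apply: eq_bigr => z _; rewrite dwZ.
Qed.

Lemma fglift_ext (M : lmodType F) (f g : seq F -> M) w :
  (forall s, f s = g s) -> fglift f w = fglift g w.
Proof. by move=> e; rewrite !fgliftE; apply: eq_bigr => z _; rewrite e. Qed.

Lemma fglift_addf (M : lmodType F) (f g : seq F -> M) w :
  fglift (fun s => f s + g s) w = fglift f w + fglift g w.
Proof.
by rewrite !fgliftE -big_split; apply: eq_bigr => z _; rewrite scalerDr.
Qed.

Lemma fglift_scalef (M : lmodType F) (f : seq F -> M) c w :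
  fglift (fun s => c *: f s) w = c *: fglift f w.
Proof.
by rewrite !fgliftE scaler_sumr; apply: eq_bigr => z _; rewrite !scalerA mulrC.
Qed.

Lemma fglift_subf (M : lmodType F) (f g : seq F -> M) w :
  fglift (fun s => f s - g s) w = fglift f w - fglift g w.
Proof.
rewrite fglift_addf; congr (_ + _).
by rewrite -scaleN1r -fglift_scalef; apply: fglift_ext => s; rewrite scaleN1r.
Qed.

Lemma fglift_0f (M : lmodType F) w : fglift (fun s => (0 : M)) w = 0.
Proof. by rewrite fgliftE big1 // => z _; rewrite scaler0. Qed.

Lemma form_ind (P : form -> Prop) :
  P 0 -> (forall w v, P w -> P v -> P (w + v)) ->
  (forall c s, P (c *: dw s)) -> forall w, P w.
Proof.
move=> P0 PD PZ w; rewrite (formE w).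
by elim: (dom w) => [|z r IH]; rewrite ?big_nil ?big_cons //; apply: PD.
Qed.

Lemma fglift_comp (f : seq F -> form) (g : seq F -> form) w :
  fglift f (fglift g w) = fglift (fun s => fglift f (g s)) w.
Proof.
elim/form_ind: w => [|w v IHw IHv|c s].
- by rewrite !raddf0.
- by rewrite !raddfD /= IHw IHv.
by rewrite !fgliftZ !fglift_dw.
Qed.

Lemma wedge_dw s t : wedge (dw s) (dw t) = dw (s ++ t).
Proof. by rewrite /wedge !fglift_dw. Qed.

Lemma wedgeDl w1 w2 v : wedge (w1 + w2) v = wedge w1 v + wedge w2 v.
Proof. by rewrite /wedge raddfD. Qed.
Lemma wedgeZl c w v : wedge (c *: w) v = c *: wedge w v.
Proof. by rewrite /wedge fgliftZ. Qed.
Lemma wedge0l v : wedge 0 v = 0.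
Proof. by rewrite /wedge raddf0. Qed.
Lemma wedgeDr w v1 v2 : wedge w (v1 + v2) = wedge w v1 + wedge w v2.
Proof.
rewrite /wedge -fglift_addf; apply: fglift_ext => s; by rewrite raddfD.
Qed.
Lemma wedgeZr c w v : wedge w (c *: v) = c *: wedge w v.
Proof.
rewrite /wedge -fglift_scalef; apply: fglift_ext => s; by rewrite fgliftZ.
Qed.
Lemma wedge0r w : wedge w 0 = 0.
Proof.
rewrite /wedge (fglift_ext _ (g := fun _ => 0)) ?fglift_0f //.
by move=> s; rewrite raddf0.
Qed.
Lemma wedge_sumr I (r : seq I) (P : pred I) w (G : I -> form) :
  wedge w (\sum_(i <- r | P i) G i) = \sum_(i <- r | P i) wedge w (G i).
Proof.
elim: r => [|i r IH]; rewrite ?big_nil ?wedge0r // !big_cons.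
by case: (P i); rewrite ?wedgeDr IH.
Qed.
Lemma wedge_suml I (r : seq I) (P : pred I) w (G : I -> form) :
  wedge (\sum_(i <- r | P i) G i) w = \sum_(i <- r | P i) wedge (G i) w.
Proof.
elim: r => [|i r IH]; rewrite ?big_nil ?wedge0l // !big_cons.
by case: (P i); rewrite ?wedgeDl IH.
Qed.
Lemma wedgeNl w v : wedge (- w) v = - wedge w v.
Proof. by rewrite -scaleN1r wedgeZl scaleN1r. Qed.
Lemma wedgeNr w v : wedge w (- v) = - wedge w v.
Proof. by rewrite -scaleN1r wedgeZr scaleN1r. Qed.
Lemma wedgeBl w1 w2 v : wedge (w1 - w2) v = wedge w1 v - wedge w2 v.
Proof. by rewrite wedgeDl wedgeNl. Qed.
Lemma wedgeBr w v1 v2 : wedge w (v1 - v2) = wedge w v1 - wedge w v2.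
Proof. by rewrite wedgeDr wedgeNr. Qed.

Lemma wedgeA u v w : wedge (wedge u v) w = wedge u (wedge v w).
Proof.
elim/form_ind: u => [|u1 u2 I1 I2|c s].
- by rewrite !wedge0l.
- by rewrite !wedgeDl I1 I2.
rewrite !wedgeZl; congr (_ *: _).
elim/form_ind: v => [|v1 v2 I1 I2|c' t].
- by rewrite wedge0r !wedge0l wedge0r.
- by rewrite [wedge (dw s) (v1 + v2)]wedgeDr [wedge (v1 + v2) w]wedgeDl wedgeDl I1 I2 -wedgeDr.
rewrite [wedge (dw s) (_ *: _)]wedgeZr !wedgeZl wedgeZr; congr (_ *: _).
elim/form_ind: w => [|w1 w2 I1 I2|c'' e].
- by rewrite !wedge0r.
- by rewrite !wedgeDr I1 I2.
by rewrite !wedgeZr !wedge_dw catA.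
Qed.

Lemma Zero_neg w : Zero w -> Zero (- w).
Proof. by move=> h; rewrite -scaleN1r; apply: zero_scale. Qed.
Lemma Zero_sub w v : Zero w -> Zero v -> Zero (w - v).
Proof. by move=> h1 h2; apply: zero_add => //; apply: Zero_neg. Qed.
Lemma Zero_eq w v : Zero w -> w = v -> Zero v.
Proof. by move=> h <-. Qed.
Lemma Zero_sum I (r : seq I) (P : pred I) (G : I -> form) :
  (forall i, P i -> Zero (G i)) -> Zero (\sum_(i <- r | P i) G i).
Proof.
move=> h; elim: r => [|i r IH]; rewrite ?big_nil ?big_cons; first exact: zero_0.
by case: ifP => Pi //; apply: zero_add => //; apply: h.
Qed.

Lemma Zero_fglift_all (g : seq F -> form) w :
  (forall s, Zero (g s)) -> Zero (fglift g w).
Proof.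
move=> h; rewrite fgliftE; apply: Zero_sum => z _; exact: zero_scale.
Qed.

Definition eqv w v := Zero (w - v).

Lemma eqv_refl w : eqv w w.
Proof. by rewrite /eqv subrr; exact: zero_0. Qed.
Lemma eqv_sym w v : eqv w v -> eqv v w.
Proof. by rewrite /eqv => h; rewrite -opprB; apply: Zero_neg. Qed.
Lemma eqv_trans w v u : eqv w v -> eqv v u -> eqv w u.
Proof.
rewrite /eqv => h1 h2; apply: Zero_eq (zero_add h1 h2) _.
by rewrite addrA subrK.
Qed.
Lemma eqvD w1 w2 v1 v2 : eqv w1 v1 -> eqv w2 v2 -> eqv (w1 + w2) (v1 + v2).
Proof.
rewrite /eqv => h1 h2; apply: Zero_eq (zero_add h1 h2) _.
by rewrite opprD addrACA.
Qed.
Lemma eqvZ c w v : eqv w v -> eqv (c *: w) (c *: v).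
Proof. by rewrite /eqv => h; rewrite -scalerBr; apply: zero_scale. Qed.
Lemma eqvN w v : eqv w v -> eqv (- w) (- v).
Proof. by move=> h; rewrite -!scaleN1r; apply: eqvZ. Qed.
Lemma eqvB w1 w2 v1 v2 : eqv w1 v1 -> eqv w2 v2 -> eqv (w1 - w2) (v1 - v2).
Proof. by move=> h1 h2; apply: eqvD => //; apply: eqvN. Qed.
Lemma eqv_sum I (r : seq I) (P : pred I) (G H : I -> form) :
  (forall i, P i -> eqv (G i) (H i)) ->
  eqv (\sum_(i <- r | P i) G i) (\sum_(i <- r | P i) H i).
Proof.
move=> h; elim: r => [|i r IH]; rewrite ?big_nil ?big_cons; first exact: eqv_refl.
by case: ifP => Pi //; apply: eqvD => //; apply: h.
Qed.
Lemma eqv_eq w v : w = v -> eqv w v.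
Proof. by move=> ->; exact: eqv_refl. Qed.
Lemma eqv0 w : eqv w 0 <-> Zero w.
Proof. by rewrite /eqv subr0. Qed.
Lemma Zero_eqv w v : eqv w v -> Zero v -> Zero w.
Proof.
rewrite /eqv => h1 h2; apply: Zero_eq (zero_add h1 h2) _; by rewrite subrK.
Qed.

Lemma set_nth_cat0 (pre post : seq F) z a :
  set_nth 0 (pre ++ z :: post) (size pre) a = pre ++ a :: post.
Proof. by elim: pre => [|y pre IH] //=; rewrite IH. Qed.

Lemma slot_add pre post a b :
  eqv (dw (pre ++ (a + b) :: post)) (dw (pre ++ a :: post) + dw (pre ++ b :: post)).
Proof.
have := @gen_add F (pre ++ 0 :: post) (size pre) a b.
rewrite !set_nth_cat0 size_cat /= addnS ltnS leq_addr => /(_ isT) g.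
by apply: Zero_eq (zero_gen g) _; rewrite opprD addrA.
Qed.

Lemma slot_mul pre post a b :
  eqv (dw (pre ++ (a * b) :: post))
      (a *: dw (pre ++ b :: post) + b *: dw (pre ++ a :: post)).
Proof.
have := @gen_leib F (pre ++ 0 :: post) (size pre) a b.
rewrite !set_nth_cat0 size_cat /= addnS ltnS leq_addr => /(_ isT) g.
by apply: Zero_eq (zero_gen g) _; rewrite opprD addrA.
Qed.

Lemma Zero_nuniq s : ~~ uniq s -> Zero (dw s).
Proof.
move=> /(uniqPn 0) [i [j [ij js e]]].
by apply: zero_gen; apply: (gen_alt ij js e).
Qed.

Lemma slot_alt (pre mid post : seq F) (x : F) : Zero (dw (pre ++ x :: mid ++ x :: post)).
Proof.
apply: Zero_nuniq; rewrite cat_uniq /= mem_cat inE eqxx orbT /=.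
by rewrite !andbF.
Qed.

Lemma Zero_fglift (f : seq F -> form) :
  (forall pre post a b, Zero (f (pre ++ (a + b) :: post) - f (pre ++ a :: post)
                                - f (pre ++ b :: post))) ->
  (forall pre post a b, Zero (f (pre ++ (a * b) :: post) - a *: f (pre ++ b :: post)
                                - b *: f (pre ++ a :: post))) ->
  (forall s, ~~ uniq s -> Zero (f s)) ->
  forall w, Zero w -> Zero (fglift f w).
Proof.
move=> hadd hmul halt w; elim => {w}.
- move=> w; case => {w}.
  + move=> xs i a b ilt.
    have E : forall c, set_nth 0 xs i c = take i xs ++ c :: drop i.+1 xs.
      by move=> c; rewrite set_nthE ilt.
    by rewrite !raddfB /= ?fgliftZ !fglift_dw !E.
  + move=> xs i a b ilt.
    have E : forall c, set_nth 0 xs i c = take i xs ++ c :: drop i.+1 xs.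
      by move=> c; rewrite set_nthE ilt.
    by rewrite !raddfB /= ?fgliftZ !fglift_dw !E.
  + move=> xs i j ij js e; rewrite fglift_dw; apply: halt.
    by apply/(uniqPn 0); exists i, j; rewrite ij js e.
- by rewrite raddf0; exact: zero_0.
- by move=> w w' _ h _ h'; rewrite raddfD; apply: zero_add.
- by move=> c w _ h; rewrite fgliftZ; apply: zero_scale.
Qed.

Lemma eqv_fglift (f : seq F -> form) :
  (forall w, Zero w -> Zero (fglift f w)) ->
  forall w v, eqv w v -> eqv (fglift f w) (fglift f v).
Proof. by move=> h w v e; rewrite /eqv -raddfB; apply: h. Qed.

Lemma Zero_wedgel w v : Zero w -> Zero (wedge w v).
Proof.
apply: Zero_fglift.
- move=> pre post a b; rewrite -!fglift_subf; apply: Zero_fglift_all => t.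
  have := slot_add pre (post ++ t) a b; rewrite /eqv -!catA /=.
  by rewrite opprD addrA.
- move=> pre post a b; rewrite -!fglift_scalef -!fglift_subf.
  apply: Zero_fglift_all => t.
  have := slot_mul pre (post ++ t) a b; rewrite /eqv -!catA /=.
  by rewrite opprD addrA.
- move=> s ns; apply: Zero_fglift_all => t; apply: Zero_nuniq.
  by apply: contra ns; rewrite cat_uniq => /andP[].
Qed.

Lemma Zero_prefix (q : seq F) w : Zero w -> Zero (fglift (fun t => dw (q ++ t)) w).
Proof.
apply: Zero_fglift.
- move=> pre post a b; have := slot_add (q ++ pre) post a b.
  by rewrite /eqv -!catA opprD addrA.
- move=> pre post a b; have := slot_mul (q ++ pre) post a b.
  by rewrite /eqv -!catA opprD addrA.
- move=> s ns; apply: Zero_nuniq.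
  by apply: contra ns; rewrite cat_uniq => /and3P[].
Qed.

Lemma wedge_prefix s w : wedge (dw s) w = fglift (fun t => dw (s ++ t)) w.
Proof. by rewrite /wedge fglift_dw. Qed.

Lemma Zero_wedger w v : Zero v -> Zero (wedge w v).
Proof.
move=> h; rewrite /wedge fgliftE; apply: Zero_sum => z _; apply: zero_scale.
exact: Zero_prefix.
Qed.

Lemma eqv_wedge w w' v v' : eqv w w' -> eqv v v' -> eqv (wedge w v) (wedge w' v').
Proof.
move=> h1 h2; apply: (@eqv_trans _ (wedge w' v)).
  by rewrite /eqv -wedgeBl; apply: Zero_wedgel.
by rewrite /eqv -wedgeBr; apply: Zero_wedger.
Qed.

End FormAlg.

Section FormAlg2.
Set Implicit Arguments. Unset Strict Implicit. Unset Printing Implicit Defensive.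
Variable F : fieldType.
Local Notation form := (Form F).
Implicit Types (w v u : form) (s t pre post mid e : seq F) (x y : F).

Lemma swap2 pre post x y :
  eqv (dw (pre ++ x :: y :: post)) (- dw (pre ++ y :: x :: post)).
Proof.
set Z := dw (pre ++ (x + y) :: (x + y) :: post).
have hZ : Zero Z by have := slot_alt pre [::] post (x + y).
have h1 := slot_add pre ((x + y) :: post) x y.
have h2 := slot_add (rcons pre x) post x y.
have h3 := slot_add (rcons pre y) post x y.
rewrite -!cats1 -!catA /= in h2 h3.
have hxx : Zero (dw (pre ++ x :: x :: post)) by have := slot_alt pre [::] post x.
have hyy : Zero (dw (pre ++ y :: y :: post)) by have := slot_alt pre [::] post y.
have e2 : eqv (dw (pre ++ x :: (x + y) :: post)) (dw (pre ++ x :: y :: post)).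
  apply: eqv_trans h2 _; apply: (@eqv_trans _ _ (0 + dw (pre ++ x :: y :: post))).
    by apply: eqvD; [apply/eqv0 | apply: eqv_refl].
  by rewrite add0r; apply: eqv_refl.
have e3 : eqv (dw (pre ++ y :: (x + y) :: post)) (dw (pre ++ y :: x :: post)).
  apply: eqv_trans h3 _; apply: (@eqv_trans _ _ (dw (pre ++ y :: x :: post) + 0)).
    by apply: eqvD; [apply: eqv_refl | apply/eqv0].
  by rewrite addr0; apply: eqv_refl.
have e4 : eqv Z (dw (pre ++ x :: y :: post) + dw (pre ++ y :: x :: post)).
  by apply: eqv_trans h1 _; apply: eqvD.
have := eqv_trans (eqv_sym (proj2 (eqv0 Z) hZ)) e4.
by rewrite /eqv /= sub0r => /Zero_neg; rewrite opprK /eqv opprK.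
Qed.

Lemma mv pre mid post x :
  eqv (dw (pre ++ mid ++ x :: post)) ((-1) ^+ (size mid) *: dw (pre ++ x :: mid ++ post)).
Proof.
elim: mid pre => [|m mid IH] pre /=; first by rewrite expr0 scale1r; apply: eqv_refl.
have := IH (rcons pre m); rewrite -!cats1 -!catA /= => h.
apply: eqv_trans h _; rewrite exprS mulN1r scaleNr -scalerN.
by apply: eqvZ; apply: swap2.
Qed.

Lemma bswap pre e t :
  eqv (dw (pre ++ e ++ t)) ((-1) ^+ (size e * size t) *: dw (pre ++ t ++ e)).
Proof.
elim: t pre => [|x t IH] pre /=.
  by rewrite muln0 expr0 scale1r cats0; apply: eqv_refl.
apply: eqv_trans (mv pre e t x) _.
have := IH (rcons pre x); rewrite -!cats1 -!catA /= => h.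
rewrite mulnS exprD -scalerA; exact: eqvZ.
Qed.

Lemma Zero_d0 pre post : Zero (dw (pre ++ 0 :: post)).
Proof.
have := slot_mul pre post 0 0; rewrite mulr0 !scale0r addr0.
by move/eqv0.
Qed.

Lemma Zero_d1 pre post : Zero (dw (pre ++ 1 :: post)).
Proof.
have := slot_mul pre post 1 1; rewrite mulr1 !scale1r /eqv opprD addrA subrr sub0r.
by move/Zero_neg; rewrite opprK.
Qed.

Lemma dpow pre post y n :
  eqv (dw (pre ++ y ^+ n.+1 :: post)) ((n.+1%:R * y ^+ n) *: dw (pre ++ y :: post)).
Proof.
elim: n => [|n IH]; first by rewrite expr1 expr0 mulr1 scale1r; apply: eqv_refl.
rewrite exprS; apply: eqv_trans (slot_mul _ _ _ _) _.
apply: (@eqv_trans _ _ (y *: ((n.+1%:R * y ^+ n) *: dw (pre ++ y :: post))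
                      + y ^+ n.+1 *: dw (pre ++ y :: post))).
  by apply: eqvD; [apply: eqvZ | apply: eqv_refl].
apply: eqv_eq; rewrite scalerA -scalerDl; congr (_ *: _).
by rewrite (exprS y n) -[n.+2]addn1 natrD; ring.
Qed.

Lemma Zero_dFp (p : nat) : p \in [pchar F] -> forall pre post y,
  Zero (dw (pre ++ y ^+ p :: post)).
Proof.
move=> hp pre post y; have pp := pcharf_prime hp.
case: p pp hp => [|n] //= _ hp.
have := dpow pre post y n; rewrite (pcharf0 hp) mul0r scale0r.
by move/eqv0.
Qed.

Lemma homog_dw s : homog (size s) (dw s).
Proof. by move=> z; rewrite /dw domU1 inE => /eqP ->. Qed.
Lemma homog0 n : homog n (0 : form).
Proof. by move=> z; rewrite dom0. Qed.
Lemma homogD n w v : homog n w -> homog n v -> homog n (w + v).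
Proof.
move=> h1 h2 z /domD_subset; rewrite mem_cat => /orP[] ?; [exact: h1|exact: h2].
Qed.
Lemma homogZ n c w : homog n w -> homog n (c *: w).
Proof. by move=> h z /domZ_subset; apply: h. Qed.
Lemma homogN n w : homog n w -> homog n (- w).
Proof. by move=> h; rewrite -scaleN1r; apply: homogZ. Qed.
Lemma homogB n w v : homog n w -> homog n v -> homog n (w - v).
Proof. by move=> h1 h2; apply: homogD => //; apply: homogN. Qed.
Lemma homog_sum n I (r : seq I) (P : pred I) (G : I -> form) :
  (forall i, P i -> homog n (G i)) -> homog n (\sum_(i <- r | P i) G i).
Proof.
move=> h; elim: r => [|i r IH]; rewrite ?big_nil ?big_cons; first exact: homog0.
by case: ifP => Pi //; apply: homogD => //; apply: h.
Qed.
Lemma homog_fglift n m (f : seq F -> form) w :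
  (forall s, size s = n -> homog m (f s)) -> homog n w -> homog m (fglift f w).
Proof.
move=> hf hw; rewrite fgliftE big_seq; apply: homog_sum => z zd; apply: homogZ.
by apply: hf; apply: hw.
Qed.

Lemma homog_wedge n m w v : homog n w -> homog m v -> homog (n + m) (wedge w v).
Proof.
move=> hw hv; apply: (homog_fglift (n := n)) hw => s sn.
apply: (homog_fglift (n := m)) hv => t tm.
by rewrite -sn -tm -size_cat; apply: homog_dw.
Qed.

Definition proj (m : nat) (w : form) : form :=
  fglift (fun s => if size s == m then dw s else 0) w.

Lemma Zero_proj m w : Zero w -> Zero (proj m w).
Proof.
apply: Zero_fglift.
- move=> pre post a b; rewrite !size_cat /=.
  case: ifP => _; rewrite ?subr0; last exact: zero_0.
  by have := slot_add pre post a b; rewrite /eqv opprD addrA.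
- move=> pre post a b; rewrite !size_cat /=.
  case: ifP => _; rewrite ?scaler0 ?subr0; last exact: zero_0.
  by have := slot_mul pre post a b; rewrite /eqv opprD addrA.
- move=> s ns; case: ifP => _; last exact: zero_0.
  exact: Zero_nuniq.
Qed.

Lemma proj_id m w : homog m w -> proj m w = w.
Proof.
move=> h; rewrite /proj fgliftE [RHS]formE big_seq [RHS]big_seq.
by apply: eq_bigr => z zd; rewrite h // eqxx.
Qed.

Lemma proj_0 m n w : homog n w -> n != m -> proj m w = 0.
Proof.
move=> h nm; rewrite /proj fgliftE big_seq big1 // => z zd.
by rewrite h // (negbTE nm) scaler0.
Qed.

Lemma Zero_split (n t : nat) w (X : form) : homog n w -> homog t X -> n != t ->
  Zero (w - X) -> Zero w.
Proof.
move=> hw hX nt /(Zero_proj n); rewrite /proj raddfB /=.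
rewrite -/(proj n w) -/(proj n X) proj_id // (proj_0 hX) ?subr0 //.
by rewrite eq_sym.
Qed.
End FormAlg2.

Section Prefix.
Set Implicit Arguments. Unset Strict Implicit. Unset Printing Implicit Defensive.
Variable F : fieldType.
Local Notation form := (Form F).
Implicit Types (w v u : form) (s t q pre post mid e : seq F) (x y : F).

Definition pre_q q w : form := fglift (fun t => dw (q ++ t)) w.

Lemma pre_q_dw q s : pre_q q (dw s) = dw (q ++ s).
Proof. by rewrite /pre_q fglift_dw. Qed.
Lemma pre_qD q w v : pre_q q (w + v) = pre_q q w + pre_q q v.
Proof. by rewrite /pre_q raddfD. Qed.
Lemma pre_qZ q c w : pre_q q (c *: w) = c *: pre_q q w.
Proof. by rewrite /pre_q fgliftZ. Qed.
Lemma pre_q0 q : pre_q q 0 = 0.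
Proof. by rewrite /pre_q raddf0. Qed.
Lemma pre_qN q w : pre_q q (- w) = - pre_q q w.
Proof. by rewrite -scaleN1r pre_qZ scaleN1r. Qed.
Lemma pre_qB q w v : pre_q q (w - v) = pre_q q w - pre_q q v.
Proof. by rewrite pre_qD pre_qN. Qed.
Lemma pre_q_nil w : pre_q [::] w = w.
Proof.
elim/form_ind: w => [|w v h1 h2|c s]; first by rewrite pre_q0.
  by rewrite pre_qD h1 h2.
by rewrite pre_qZ pre_q_dw.
Qed.
Lemma pre_q_comp q q' w : pre_q q (pre_q q' w) = pre_q (q ++ q') w.
Proof.
elim/form_ind: w => [|w v h1 h2|c s]; first by rewrite !pre_q0.
  by rewrite !pre_qD h1 h2.
by rewrite !pre_qZ !pre_q_dw catA.
Qed.
Lemma wedge_pre q w : wedge (dw q) w = pre_q q w.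
Proof. by rewrite wedge_prefix. Qed.
Lemma Zero_pre_q q w : Zero w -> Zero (pre_q q w).
Proof. exact: Zero_prefix. Qed.
Lemma eqv_pre_q q w v : eqv w v -> eqv (pre_q q w) (pre_q q v).
Proof. by move=> h; rewrite /eqv -pre_qB; apply: Zero_pre_q. Qed.
Lemma Zero_pre_nuniq q w : ~~ uniq q -> Zero (pre_q q w).
Proof.
move=> nq; apply: Zero_fglift_all => t; apply: Zero_nuniq.
by apply: contra nq; rewrite cat_uniq => /andP[].
Qed.
Lemma homog_pre_q n q w : homog n w -> homog (size q + n) (pre_q q w).
Proof. by move=> h; rewrite -wedge_pre; apply: homog_wedge => //; apply: homog_dw. Qed.

Lemma nuniq_split s : ~~ uniq s ->
  exists pre x mid post, s = pre ++ x :: mid ++ x :: post.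
Proof.
elim: s => [|y s IH] //=; rewrite negb_and negbK => /orP[ys|/IH].
  case/splitPr: ys => p1 p2; by exists [::], y, p1, p2.
by case=> pre [x [mid [post ->]]]; exists (y :: pre), x, mid, post.
Qed.

Lemma eqv_lin2 (X1 X2 X3 Y1 Y2 Y3 : form) : eqv X1 (X2 + X3) -> eqv Y1 (Y2 + Y3) ->
  eqv (X1 - Y1) ((X2 - Y2) + (X3 - Y3)).
Proof.
move=> h1 h2; have := eqvB h1 h2; by rewrite opprD addrACA.
Qed.

End Prefix.

Section Contraction.
Set Implicit Arguments. Unset Strict Implicit. Unset Printing Implicit Defensive.
Variable F : fieldType.
Local Notation form := (Form F).
Implicit Types (w v u : form) (s t q pre post mid e : seq F) (x y : F).
Variable D : F -> F.
Hypothesis hDadd : forall x y, D (x + y) = D x + D y.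
Hypothesis hDmul : forall x y, D (x * y) = x * D y + y * D x.

Fixpoint ic (s : seq F) : form :=
  match s with [::] => 0 | x :: s' => D x *: dw s' - pre_q [:: x] (ic s') end.

Definition ctr w : form := fglift ic w.

Lemma ctr_dw s : ctr (dw s) = ic s.
Proof. by rewrite /ctr fglift_dw. Qed.
Lemma ctrD w v : ctr (w + v) = ctr w + ctr v.
Proof. by rewrite /ctr raddfD. Qed.
Lemma ctrZ c w : ctr (c *: w) = c *: ctr w.
Proof. by rewrite /ctr fgliftZ. Qed.
Lemma ctr0 : ctr 0 = 0.
Proof. by rewrite /ctr raddf0. Qed.
Lemma ctrN w : ctr (- w) = - ctr w.
Proof. by rewrite -scaleN1r ctrZ scaleN1r. Qed.
Lemma ctrB w v : ctr (w - v) = ctr w - ctr v.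
Proof. by rewrite ctrD ctrN. Qed.

Lemma ctr_pre y w : ctr (pre_q [:: y] w) = D y *: w - pre_q [:: y] (ctr w).
Proof.
elim/form_ind: w => [|w v h1 h2|c s].
- by rewrite pre_q0 ctr0 pre_q0 scaler0 subr0.
- rewrite pre_qD ctrD h1 h2 ctrD pre_qD scalerDr.
  by rewrite opprD addrACA.
by rewrite pre_qZ ctrZ pre_q_dw ctr_dw /= ctrZ ctr_dw pre_qZ scalerBr scalerA mulrC -scalerA.
Qed.

Lemma ctr_pre0 q w : (forall x, x \in q -> D x = 0) ->
  ctr (pre_q q w) = (-1) ^+ (size q) *: pre_q q (ctr w).
Proof.
elim: q w => [|y q IH] w hq; first by rewrite !pre_q_nil expr0 scale1r.
rewrite -[y :: q]/([:: y] ++ q) -pre_q_comp ctr_pre hq ?inE ?eqxx // scale0r sub0r.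
rewrite IH; last by move=> x xq; apply: hq; rewrite inE xq orbT.
by rewrite pre_qZ pre_q_comp /= exprS mulN1r scaleNr.
Qed.

Lemma D0 : D 0 = 0.
Proof. by apply: (addrI (D 0)); rewrite [RHS]addr0 -hDadd addr0. Qed.

Lemma ic_add pre post a b :
  eqv (ic (pre ++ (a + b) :: post)) (ic (pre ++ a :: post) + ic (pre ++ b :: post)).
Proof.
elim: pre => [|y pre IH] /=.
  apply: eqv_lin2; first by rewrite hDadd scalerDl; apply: eqv_refl.
  rewrite /pre_q -fglift_addf /eqv -fglift_subf.
  apply: Zero_fglift_all => t; have := slot_add [::] t a b; by [].
apply: eqv_lin2; first by rewrite -scalerDr; apply: eqvZ; apply: slot_add.
by rewrite -pre_qD; apply: eqv_pre_q.
Qed.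

Lemma ic_mul pre post a b :
  eqv (ic (pre ++ (a * b) :: post)) (a *: ic (pre ++ b :: post) + b *: ic (pre ++ a :: post)).
Proof.
have E : forall (U2 V2 U3 V3 : form),
    a *: (U2 - V2) + b *: (U3 - V3) = (a *: U2 + b *: U3) - (a *: V2 + b *: V3).
  by move=> U2 V2 U3 V3; rewrite !scalerBr opprD addrACA.
elim: pre => [|y pre IH] /=.
  rewrite E; apply: eqvB.
    by rewrite hDmul scalerDl !scalerA; apply: eqv_refl.
  rewrite /pre_q -!fglift_scalef -fglift_addf /eqv -fglift_subf.
  apply: Zero_fglift_all => t; have := slot_mul [::] t a b; by [].
rewrite E; apply: eqvB.
  rewrite !scalerA ![_ * D y]mulrC -!scalerA -scalerDr; apply: eqvZ; exact: slot_mul.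
by rewrite -!pre_qZ -pre_qD; apply: eqv_pre_q.
Qed.

Lemma ic_dup q mid post x : x \in q ->
  eqv (pre_q q (ic (mid ++ x :: post))) (((-1) ^+ (size mid) * D x) *: dw (q ++ mid ++ post)).
Proof.
elim: mid q => [|m mid IH] q xq /=.
  rewrite pre_qB pre_q_comp pre_qZ pre_q_dw expr0 mul1r.
  apply: (@eqv_trans _ _ (D x *: dw (q ++ post) - 0)); last by rewrite subr0; apply: eqv_refl.
  apply: eqvB; first exact: eqv_refl.
  apply/eqv0/Zero_pre_nuniq; rewrite cat_uniq /= xq /= andbF //.
rewrite pre_qB pre_q_comp pre_qZ pre_q_dw.
apply: (@eqv_trans _ _ (0 - ((-1) ^+ size mid * D x) *: dw ((q ++ [:: m]) ++ mid ++ post))).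
  apply: eqvB; last by apply: IH; rewrite mem_cat xq.
  apply/eqv0; apply: zero_scale; apply: Zero_nuniq.
  rewrite cat_uniq; apply/negP => /and3P[_ /hasPn h _].
  by move: (h x); rewrite mem_cat inE eqxx orbT => /(_ isT) /negP.
by rewrite sub0r -catA /= exprS mulN1r mulNr scaleNr; apply: eqv_refl.
Qed.

Lemma ic_alt s : ~~ uniq s -> Zero (ic s).
Proof.
case/nuniq_split => pre [x [mid [post ->]]].
elim: pre => [|y pre IH] /=.
  apply/eqv0; apply: (@eqv_trans _ _ (D x *: ((-1) ^+ size mid *: dw (x :: mid ++ post))
       - ((-1) ^+ size mid * D x) *: dw ([:: x] ++ mid ++ post))).
    apply: eqvB; first by apply: eqvZ; apply: (mv [::]).
    by apply: ic_dup; rewrite inE.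
  by rewrite scalerA mulrC subrr; apply: eqv_refl.
by apply: Zero_sub; [apply: zero_scale; apply: slot_alt | apply: Zero_pre_q].
Qed.

Lemma Zero_ctr w : Zero w -> Zero (ctr w).
Proof.
apply: Zero_fglift.
- by move=> pre post a b; have := ic_add pre post a b; rewrite /eqv opprD addrA.
- by move=> pre post a b; have := ic_mul pre post a b; rewrite /eqv opprD addrA.
- exact: ic_alt.
Qed.

Lemma eqv_ctr w v : eqv w v -> eqv (ctr w) (ctr v).
Proof. by move=> h; rewrite /eqv -ctrB; apply: Zero_ctr. Qed.

Lemma homog_ic s : homog (size s).-1 (ic s).
Proof.
elim: s => [|x s IH] /=; first exact: homog0.
apply: homogB; first by apply: homogZ; apply: homog_dw.
case: s IH => [|y s] IH /=; first by rewrite pre_q0; apply: homog0.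
by have := @homog_pre_q _ _ [:: x] _ IH; rewrite /= add1n.
Qed.

Lemma homog_ctr n w : homog n w -> homog n.-1 (ctr w).
Proof. by apply: homog_fglift => s <-; apply: homog_ic. Qed.

End Contraction.

Section Span.
Set Implicit Arguments. Unset Strict Implicit. Unset Printing Implicit Defensive.
Variable F : fieldType.
Local Notation form := (Form F).
Implicit Types (w v u : form) (s t q pre post mid e : seq F) (x y : F).
Variable p : nat.
Hypothesis hp : p \in [pchar F].
Variable T : F -> Prop.

Definition spanT x := exists cs : seq (F * F), (forall ct, ct \in cs -> T ct.2) /\
  forall pre post, eqv (dw (pre ++ x :: post)) (\sum_(ct <- cs) ct.1 *: dw (pre ++ ct.2 :: post)).

Lemma spanT_T x : T x -> spanT x.
Proof.
move=> Tx; exists [:: (1, x)]; split; first by move=> ct; rewrite inE => /eqP ->.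
by move=> pre post; rewrite big_seq1 scale1r; apply: eqv_refl.
Qed.

Lemma spanT_zero x : (forall pre post, Zero (dw (pre ++ x :: post))) -> spanT x.
Proof.
move=> h; exists [::]; split => // pre post; rewrite big_nil; exact/eqv0.
Qed.

Lemma spanT_Fp y : Fp p y -> spanT y.
Proof. by case=> z ->; apply: spanT_zero => pre post; apply: Zero_dFp. Qed.

Lemma spanT_add x y : spanT x -> spanT y -> spanT (x + y).
Proof.
move=> [cs [hT h]] [cs' [hT' h']]; exists (cs ++ cs'); split.
  by move=> ct; rewrite mem_cat => /orP[]; [apply: hT|apply: hT'].
move=> pre post; rewrite big_cat; apply: eqv_trans (slot_add _ _ _ _) _.
exact: eqvD.
Qed.

Lemma dneg pre post x : eqv (dw (pre ++ - x :: post)) (- dw (pre ++ x :: post)).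
Proof.
have := slot_add pre post x (- x); rewrite subrr => h.
have h0 : Zero (dw (pre ++ 0 :: post)) by apply: Zero_d0.
have := eqv_trans (eqv_sym (proj2 (eqv0 _) h0)) h.
by rewrite /eqv sub0r => /Zero_neg; rewrite opprK addrC opprK.
Qed.

Lemma spanT_neg x : spanT x -> spanT (- x).
Proof.
move=> [cs [hT h]]; exists [seq (- ct.1, ct.2) | ct <- cs]; split.
  by move=> ct /mapP [ct0 ct0cs ->] /=; exact: (hT ct0).
move=> pre post; rewrite big_map; apply: eqv_trans (dneg _ _ _) _.
apply: (@eqv_trans _ _ (- \sum_(ct <- cs) ct.1 *: dw (pre ++ ct.2 :: post))).
  exact: eqvN.
by rewrite -sumrN; apply: eqv_eq; apply: eq_bigr => ct _; rewrite scaleNr.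
Qed.

Lemma spanT_mul x y : spanT x -> spanT y -> spanT (x * y).
Proof.
move=> [cs [hT h]] [cs' [hT' h']].
exists ([seq (x * ct.1, ct.2) | ct <- cs'] ++ [seq (y * ct.1, ct.2) | ct <- cs]); split.
  move=> ct; rewrite mem_cat => /orP[] /mapP [ct0 ct0cs ->] /=; [exact: (hT' ct0)|exact: (hT ct0)].
move=> pre post; rewrite big_cat !big_map; apply: eqv_trans (slot_mul _ _ _ _) _.
apply: eqvD.
  apply: eqv_trans (eqvZ x (h' pre post)) _; rewrite scaler_sumr; apply: eqv_eq.
  by apply: eq_bigr => ct _; rewrite scalerA.
apply: eqv_trans (eqvZ y (h pre post)) _; rewrite scaler_sumr; apply: eqv_eq.
by apply: eq_bigr => ct _; rewrite scalerA.
Qed.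

Lemma spanT_inv x : spanT x -> spanT (x^-1).
Proof.
have [->|nx] := eqVneq x 0.
  by rewrite invr0 => _; apply: spanT_zero => pre post; apply: Zero_d0.
move=> [cs [hT h]]; exists [seq (- x^-2 * ct.1, ct.2) | ct <- cs]; split.
  by move=> ct /mapP [ct0 ct0cs ->] /=; exact: (hT ct0).
move=> pre post.
have h1 := slot_mul pre post x x^-1; rewrite mulfV // in h1.
have h0 := Zero_d1 pre post.
have e : eqv (x *: dw (pre ++ x^-1 :: post) + x^-1 *: dw (pre ++ x :: post)) 0.
  exact: eqv_sym (eqv_trans (eqv_sym (proj2 (eqv0 _) h0)) h1).
have := eqvZ (x^-1) e; rewrite scaler0 scalerDr !scalerA mulVf // scale1r => e2.
have e3 : eqv (dw (pre ++ x^-1 :: post)) (- ((x^-1 * x^-1) *: dw (pre ++ x :: post))).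
  by move: e2; rewrite /eqv subr0 opprK.
apply: eqv_trans e3 _; rewrite big_map.
apply: (@eqv_trans _ _ (- ((x ^-1 * x ^-1) *: \sum_(ct <- cs) ct.1 *: dw (pre ++ ct.2 :: post)))).
  by apply: eqvN; apply: eqvZ.
rewrite scaler_sumr -sumrN; apply: eqv_eq; apply: eq_bigr => ct _.
by rewrite scalerA -scaleNr; congr (_ *: _); rewrite -invfM -expr2 mulNr.
Qed.

Lemma spanT_subfield : subfield_closed spanT.
Proof.
have p0 : (0 < p)%N by rewrite prime_gt0 // (pcharf_prime hp).
split.
- by apply: spanT_Fp; exists 0; rewrite expr0n; case: p p0.
- by apply: spanT_Fp; exists 1; rewrite expr1n.
- exact: spanT_add.
- exact: spanT_neg.
- split; [exact: spanT_mul | exact: spanT_inv].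
Qed.

Lemma adjoin_spanT x : adjoin p T x -> spanT x.
Proof.
move=> h; apply: h; [exact: spanT_subfield | exact: spanT_Fp | exact: spanT_T].
Qed.

Lemma span_list (u : seq F) : (forall x, x \in u -> spanT x) ->
  exists css : seq (F * seq F),
    (forall cl, cl \in css -> size cl.2 = size u /\ forall y, y \in cl.2 -> T y) /\
    forall pre post, eqv (dw (pre ++ u ++ post))
                         (\sum_(cl <- css) cl.1 *: dw (pre ++ cl.2 ++ post)).
Proof.
elim: u => [|x u IH] hu.
  exists [:: (1, [::])]; split; first by move=> cl; rewrite inE => /eqP ->.
  by move=> pre post; rewrite big_seq1 scale1r; apply: eqv_refl.
have [cs [hT h]] := hu x (mem_head _ _).
have [css [hT' h']] := IH (fun y yu => hu y (@mem_behead _ (x :: u) _ yu)).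
exists [seq (ct.1 * cl.1, ct.2 :: cl.2) | ct <- cs, cl <- css]; split.
  move=> cl /allpairsP [[ct cl'] [ctcs cl'css ->]] /=.
  have [s1 s2] := hT' _ cl'css; split; first by rewrite s1.
  by move=> y; rewrite inE => /orP[/eqP ->|]; [apply: hT | apply: s2].
move=> pre post; rewrite big_allpairs_dep /=.
apply: eqv_trans (h pre (u ++ post)) _; apply: eqv_sum => ct _.
have e := h' (rcons pre ct.2) post.
rewrite cat_rcons in e.
apply: eqv_trans (eqvZ ct.1 e) _; rewrite scaler_sumr; apply: eqv_eq.
by apply: eq_bigr => cl _; rewrite scalerA cat_rcons.
Qed.

End Span.

Section Dim.
Set Implicit Arguments. Unset Strict Implicit. Unset Printing Implicit Defensive.
Variable F : fieldType.
Variable K : F -> Prop.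
Hypotheses (K0 : K 0) (K1 : K 1) (KD : forall x y, K x -> K y -> K (x + y))
  (KN : forall x, K x -> K (- x)) (KM : forall x y, K x -> K y -> K (x * y)).

Lemma K_sum (I : Type) (r : seq I) (P : pred I) (f : I -> F) :
  (forall i, P i -> K (f i)) -> K (\sum_(i <- r | P i) f i).
Proof. by move=> h; apply: big_ind => //. Qed.

Lemma ext_le (L : F -> Prop) d1 d2 : ext_degree K L d1 -> ext_degree K L d2 -> (d2 <= d1)%N.
Proof.
move=> [b1 [<- inb1 ind1 span1]] [b2 [<- inb2 ind2 span2]].
set n1 := size b1; set n2 := size b2.
have hC : forall i : 'I_n2, exists c : seq F, [/\ size c = n1, (forall y, y \in c -> K y)
     & b2`_i = \sum_(l < n1) c`_l * b1`_l].
  by move=> i; apply: span1; apply: inb2; apply: mem_nth.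
have hC' : forall i : 'I_n1, exists c : seq F, [/\ size c = n2, (forall y, y \in c -> K y)
     & b1`_i = \sum_(l < n2) c`_l * b2`_l].
  by move=> i; apply: span2; apply: inb1; apply: mem_nth.
pose C i := proj1_sig (constructive_indefinite_description _ (hC i)).
pose C' i := proj1_sig (constructive_indefinite_description _ (hC' i)).
have PC i : [/\ size (C i) = n1, (forall y, y \in C i -> K y)
     & b2`_i = \sum_(l < n1) (C i)`_l * b1`_l].
  exact: proj2_sig (constructive_indefinite_description _ (hC i)).
have PC' i : [/\ size (C' i) = n2, (forall y, y \in C' i -> K y)
     & b1`_i = \sum_(l < n2) (C' i)`_l * b2`_l].
  exact: proj2_sig (constructive_indefinite_description _ (hC' i)).
pose M := \matrix_(i < n2, l < n1) (C i)`_l.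
pose M' := \matrix_(l < n1, m < n2) (C' l)`_m.
have KMe : forall i l, K (M i l).
  move=> i l; rewrite mxE; have [s1 k1 _] := PC i; apply: k1; apply: mem_nth.
  by rewrite s1.
have KMe' : forall i l, K (M' i l).
  move=> i l; rewrite mxE; have [s1 k1 _] := PC' i; apply: k1; apply: mem_nth.
  by rewrite s1.
have E : forall i : 'I_n2, b2`_i = \sum_(m < n2) (M *m M') i m * b2`_m.
  move=> i; have [_ _ ->] := PC i.
  have E1 : forall l : 'I_n1, b1`_l = \sum_(m < n2) (C' l)`_m * b2`_m.
    by move=> l; case: (PC' l).
  under eq_bigr => l _ do rewrite E1 mulr_sumr.
  rewrite exchange_big /=; apply: eq_bigr => m _; rewrite !mxE mulr_suml.
  by apply: eq_bigr => l _; rewrite !mxE mulrA.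
have MM : M *m M' = 1%:M.
  apply/matrixP => i m.
  pose c := mkseq (fun j => (M *m M') i (insubd i j) - (i == j :> nat)%:R) n2.
  have sc : size c = n2 by rewrite size_mkseq.
  have := ind2 c sc.
  have Kc : forall y, y \in c -> K y.
    move=> y /mapP [j _ ->]; apply: KD; last first.
      by apply: KN; case: (_ == _); rewrite ?K0 ?K1.
    by rewrite mxE; apply: K_sum => l _; apply: KM.
  move=> /(_ Kc) h.
  have : c`_m = 0.
    apply: h.
    transitivity (\sum_(j < n2) (M *m M') i j * b2`_j - \sum_(j < n2) (i == j :> nat)%:R * b2`_j).
      by rewrite -sumrB; apply: eq_bigr => j _; rewrite nth_mkseq // valKd mulrBl.
    rewrite -E (bigD1 i) //= eqxx mul1r big1 ?addr0 ?subrr // => j ji.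
    by rewrite val_eqE eq_sym (negbTE ji) mul0r.
  rewrite nth_mkseq // valKd => /eqP; rewrite subr_eq0 => /eqP ->.
  by rewrite mxE.
have : (n2 <= \rank M)%N.
  by rewrite -{1}(mxrank1 F n2) -MM; apply: mxrankM_maxl.
move=> h; apply: leq_trans h _; exact: rank_leq_col.
Qed.

Lemma ext_uniq (L : F -> Prop) d1 d2 : ext_degree K L d1 -> ext_degree K L d2 -> d1 = d2.
Proof. by move=> h1 h2; apply/eqP; rewrite eqn_leq (ext_le h1 h2) (ext_le h2 h1). Qed.

End Dim.

Section Deriv.
Set Implicit Arguments. Unset Strict Implicit. Unset Printing Implicit Defensive.
Variable F : fieldType.
Variable p : nat.
Hypothesis hp : p \in [pchar F].
Local Notation Fp := (@Fp F p).

Lemma p_prime : prime p. Proof. exact: pcharf_prime hp. Qed.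
Lemma p_gt0 : (0 < p)%N. Proof. exact: prime_gt0 p_prime. Qed.

Lemma Fp0 : Fp 0. Proof. by exists 0; rewrite expr0n; case: p p_gt0. Qed.
Lemma Fp1 : Fp 1. Proof. by exists 1; rewrite expr1n. Qed.
Lemma Fp_add x y : Fp x -> Fp y -> Fp (x + y).
Proof.
case=> u -> [v ->]; exists (u + v).
by have := pFrobenius_autD_comm hp (mulrC u v); rewrite !pFrobenius_autE.
Qed.
Lemma Fp_neg x : Fp x -> Fp (- x).
Proof.
case=> u ->; exists (- u).
by have := pFrobenius_autN hp u; rewrite !pFrobenius_autE.
Qed.
Lemma Fp_mul x y : Fp x -> Fp y -> Fp (x * y).
Proof. by case=> u -> [v ->]; exists (u * v); rewrite exprMn. Qed.
Lemma Fp_inv x : Fp x -> Fp (x^-1).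
Proof. by case=> u ->; exists (u^-1); rewrite exprVn. Qed.
Lemma Fp_pow x : Fp (x ^+ p). Proof. by exists x. Qed.

(* ----------- partial derivations as relations -------------- *)
Definition Good (G : F -> F -> Prop) :=
  [/\ (forall x y y', G x y -> G x y' -> y = y'),
      (forall y, Fp y -> G y 0),
      (forall x dx y dy, G x dx -> G y dy -> G (x + y) (dx + dy)),
      (forall x dx y dy, G x dx -> G y dy -> G (x * y) (x * dy + y * dx)) &
      (forall x dx, G x dx -> G (- x) (- dx)) /\
      (forall x dx, G x dx -> exists w, G (x^-1) w)].

Section GoodG.
Variable G : F -> F -> Prop.
Hypothesis gG : Good G.

Definition gdom x := exists y, G x y.

Lemma G_fun x y y' : G x y -> G x y' -> y = y'. Proof. by case: gG => h _ _ _ _; apply: h. Qed.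
Lemma G_Fp y : Fp y -> G y 0. Proof. by case: gG => _ h _ _ _; apply: h. Qed.
Lemma G_add x dx y dy : G x dx -> G y dy -> G (x + y) (dx + dy). Proof. by case: gG => _ _ h _ _; apply: h. Qed.
Lemma G_mul x dx y dy : G x dx -> G y dy -> G (x * y) (x * dy + y * dx). Proof. by case: gG => _ _ _ h _; apply: h. Qed.
Lemma G_neg x dx : G x dx -> G (- x) (- dx). Proof. by case: gG => _ _ _ _ [h _]; apply: h. Qed.
Lemma G_inv x dx : G x dx -> exists w, G (x^-1) w. Proof. by case: gG => _ _ _ _ [_ h]; apply: h. Qed.
Lemma G0 : G 0 0. Proof. exact: G_Fp Fp0. Qed.
Lemma G1 : G 1 0. Proof. exact: G_Fp Fp1. Qed.

Lemma dom_Fp y : Fp y -> gdom y. Proof. by move=> h; exists 0; apply: G_Fp. Qed.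
Lemma dom_add x y : gdom x -> gdom y -> gdom (x + y).
Proof. by case=> dx hx [dy hy]; exists (dx + dy); apply: G_add. Qed.
Lemma dom_mul x y : gdom x -> gdom y -> gdom (x * y).
Proof. by case=> dx hx [dy hy]; eexists; apply: G_mul hx hy. Qed.
Lemma dom_neg x : gdom x -> gdom (- x).
Proof. by case=> dx hx; eexists; apply: G_neg hx. Qed.
Lemma dom_inv x : gdom x -> gdom (x^-1).
Proof. by case=> dx hx; apply: G_inv hx. Qed.
Lemma dom_pow x n : gdom x -> gdom (x ^+ n).
Proof.
move=> h; elim: n => [|n IH]; first by rewrite expr0; apply: dom_Fp Fp1.
by rewrite exprS; apply: dom_mul.
Qed.
Lemma gdom0 : gdom 0. Proof. exact: dom_Fp Fp0. Qed.
Lemma gdom1 : gdom 1. Proof. exact: dom_Fp Fp1. Qed.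
Lemma dom_sum I (r : seq I) (P : pred I) (f : I -> F) :
  (forall i, P i -> gdom (f i)) -> gdom (\sum_(i <- r | P i) f i).
Proof. by move=> h; apply: big_ind => //; [apply: gdom0 | apply: dom_add]. Qed.
Lemma G_sum I (r : seq I) (P : pred I) (f g : I -> F) :
  (forall i, P i -> G (f i) (g i)) -> G (\sum_(i <- r | P i) f i) (\sum_(i <- r | P i) g i).
Proof.
move=> h; apply: (big_ind2 (fun a b => G a b)) => //; [exact: G0 | exact: G_add].
Qed.

Definition polyG (q Dq : {poly F}) := forall i, G q`_i Dq`_i.
Definition polyL (q : {poly F}) := forall i, gdom q`_i.

Lemma polyG_L q Dq : polyG q Dq -> polyL q.
Proof. by move=> h i; exists Dq`_i. Qed.

Lemma polyG_ex q : polyL q -> exists Dq, polyG q Dq.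
Proof.
move=> h; pose f i := proj1_sig (constructive_indefinite_description _ (h i)).
have hf i : G q`_i (f i) := proj2_sig (constructive_indefinite_description _ (h i)).
exists (\poly_(i < size q) f i) => i; rewrite coef_poly.
case: ltnP => // si; rewrite nth_default //; exact: G0.
Qed.

Lemma polyG_add q Dq r Dr : polyG q Dq -> polyG r Dr -> polyG (q + r) (Dq + Dr).
Proof. by move=> h1 h2 i; rewrite !coefD; apply: G_add. Qed.
Lemma polyG_neg q Dq : polyG q Dq -> polyG (- q) (- Dq).
Proof. by move=> h i; rewrite !coefN; apply: G_neg. Qed.
Lemma polyG_mul q Dq r Dr : polyG q Dq -> polyG r Dr -> polyG (q * r) (Dq * r + q * Dr).
Proof.
move=> h1 h2 i; rewrite coefD !coefM -big_split /=.
apply: G_sum => j _; rewrite (mulrC (Dq`_j)) addrC; exact: G_mul.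
Qed.
Lemma polyG_C c dc : G c dc -> polyG c%:P dc%:P.
Proof. by move=> h i; rewrite !coefC; case: (i == 0) => //; exact: G0. Qed.
Lemma polyG_X : polyG 'X 0.
Proof. by move=> i; rewrite coefX coef0; case: (i == 1); [exact: G1 | exact: G0]. Qed.

Lemma polyL_add q r : polyL q -> polyL r -> polyL (q + r).
Proof. by move=> h1 h2 i; rewrite coefD; apply: dom_add. Qed.
Lemma polyL_mul q r : polyL q -> polyL r -> polyL (q * r).
Proof.
move=> /polyG_ex [Dq hq] /polyG_ex [Dr hr]; exact: polyG_L (polyG_mul hq hr).
Qed.
Lemma polyL_C c : gdom c -> polyL c%:P.
Proof. by case=> dc h; apply: polyG_L (polyG_C h). Qed.
Lemma polyL_X : polyL 'X.
Proof. exact: polyG_L polyG_X. Qed.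
Lemma polyL_neg q : polyL q -> polyL (- q).
Proof. by move=> h i; rewrite coefN; apply: dom_neg. Qed.
Lemma polyL_exp q n : polyL q -> polyL (q ^+ n).
Proof.
move=> h; elim: n => [|n IH]; first by rewrite expr0; apply: polyL_C gdom1.
by rewrite exprS; apply: polyL_mul.
Qed.
Lemma polyL_Xn n : polyL 'X^n.
Proof. exact: polyL_exp polyL_X. Qed.
Lemma polyL_scale c q : gdom c -> polyL q -> polyL (c *: q).
Proof. by move=> hc hq; rewrite -mul_polyC; apply: polyL_mul => //; apply: polyL_C. Qed.

Lemma divL (m : {poly F}) : polyL m -> m \is monic -> forall r, polyL r ->
  exists h r0, [/\ polyL h, polyL r0, r = h * m + r0 & (size r0 < size m)%N].
Proof.
move=> hm mm r; have [n] := ubnP (size r); elim: n r => [|n IH] r // sr hr.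
have [lt|ge] := ltnP (size r) (size m).
  by exists 0, r; rewrite mul0r add0r; split => //; move=> i; rewrite coef0; apply: gdom0.
have sm : (0 < size m)%N by rewrite size_poly_gt0 monic_neq0.
set k := (size r - size m)%N; set c := lead_coef r.
set r' := r - (c *: 'X^k) * m.
have hc : gdom c by apply: hr.
have hr' : polyL r'.
  apply: polyL_add => //; apply: polyL_neg; apply: polyL_mul => //.
  by apply: polyL_scale => //; apply: polyL_Xn.
have sr' : (size r' < size r)%N.
  have sr0 : (0 < size r)%N by apply: leq_trans sm ge.
  rewrite -[X in (_ < X)%N](prednK sr0) ltnS; apply/leq_sizeP => j hj.
  rewrite /r' coefB -scalerAl coefZ coefXnM.
  have kj : (k <= j)%N by rewrite /k; lia.
  rewrite ltnNge kj /=.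
  have [->|ne] := eqVneq j (size r).-1.
    have -> : ((size r).-1 - k)%N = (size m).-1 by rewrite /k; lia.
    by rewrite -!lead_coefE (monicP mm) mulr1 subrr.
  have lt : ((size r).-1 < j)%N by rewrite ltn_neqAle eq_sym ne hj.
  have lt2 : (size r <= j)%N by rewrite -(prednK sr0).
  rewrite nth_default //.
  rewrite nth_default ?mulr0 ?subr0 //; rewrite /k; move: lt2 ge; clear; move: (size r) (size m) j => a b c; lia.
have [h [r0 [hh hr0 e s0]]] := IH r' (leq_trans sr' sr) hr'.
exists (h + c *: 'X^k), r0; split => //.
  apply: polyL_add => //; apply: polyL_scale => //; exact: polyL_Xn.
by rewrite -[r](subrK ((c *: 'X^k) * m)) -/r' e mulrDl addrAC.
Qed.

Lemma dom_signr k z : gdom z -> gdom ((-1) ^+ k * z).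
Proof.
move=> h; elim: k => [|k IH]; first by rewrite expr0 mul1r.
by rewrite exprS mulN1r mulNr; apply: dom_neg.
Qed.

Lemma XsubC_expp (x : F) : ('X - x%:P) ^+ p = 'X^p - (x ^+ p)%:P :> {poly F}.
Proof.
have hp' : p \in [pchar {poly F}] by rewrite pchar_poly.
have := pFrobenius_autB_comm hp' (mulrC 'X (x%:P)); rewrite !pFrobenius_autE.
by rewrite -polyC_exp.
Qed.

Section Root.
Variable x : F.
Hypothesis nx : ~ gdom x.
Local Notation b := (x ^+ p).
Local Notation m := ('X^p - b%:P).

Lemma polyL_m : polyL m.
Proof.
apply: polyL_add; first exact: polyL_Xn.
by apply: polyL_neg; apply: polyL_C; apply: dom_Fp; apply: Fp_pow.
Qed.

Lemma m_monic : m \is monic. Proof. exact: monicXnsubC p_gt0. Qed.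
Lemma m_root : m.[x] = 0. Proof. by rewrite hornerD hornerN hornerXn hornerC subrr. Qed.

Lemma noroot q : polyL q -> (size q <= p)%N -> q.[x] = 0 -> q = 0.
Proof.
have [n] := ubnP (size q); elim: n q => [|n IH] q // sq hq sqp qx.
apply: NNPP => q0.
set lc := lead_coef q.
have lc0 : lc != 0 by rewrite lead_coef_eq0; apply/eqP.
have hlc : gdom lc by apply: hq.
set q1 := lc^-1 *: q.
have hq1 : polyL q1 by apply: polyL_scale => //; apply: dom_inv.
have mq1 : q1 \is monic.
  by apply/monicP; rewrite lead_coefZ mulVf.
have sq1 : size q1 = size q by rewrite size_scale // invr_eq0.
have q1x : q1.[x] = 0 by rewrite hornerZ qx mulr0.
have [h [r1 [hh hr1 e s1]]] := divL hq1 mq1 polyL_m.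
have r1x : r1.[x] = 0.
  by have := congr1 (fun P => P.[x]) e; rewrite /= m_root hornerD hornerM q1x mulr0 add0r.
have r10 : r1 = 0.
  rewrite sq1 in s1.
  apply: IH; [ | exact: hr1 | | exact: r1x].
    by apply: leq_trans s1 _; rewrite -ltnS.
  by apply: ltnW; apply: leq_trans s1 sqp.
rewrite r10 addr0 in e.
have : q1 %| ('X - x%:P) ^+ p by rewrite XsubC_expp e dvdp_mulIr.
case/dvdp_exp_XsubCP => k kp.
rewrite eqp_monic //; last by apply: monic_exp; apply: monicXsubC.
move/eqP => e1.
have sk : size q1 = k.+1 by rewrite e1 size_exp_XsubC.
have k0 : (0 < k)%N.
  case: k e1 sk {kp} => // e1 _; move: q1x; rewrite e1 expr0 hornerC => /eqP.
  by rewrite oner_eq0.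
have kp' : (k < p)%N by rewrite -ltnS -sk sq1.
have hk : gdom (x ^+ k).
  have := hq1 0; rewrite -horner_coef0 e1 horner_exp hornerXsubC sub0r exprNn => hh0.
  by have := dom_signr k hh0; rewrite mulrA -expr2 sqrr_sign mul1r.
have [a _ ha] := Bezoutl k p_gt0.
have g1 : gcdn p k = 1%N.
  by apply/eqP; rewrite -/(coprime p k) prime_coprime ?p_prime // gtnNdvd.
rewrite g1 in ha.
have ex : x ^+ (1 + a * k) = (x ^+ p) ^+ ((1 + a * k) %/ p).
  by rewrite -exprM [(p * _)%N]mulnC divnK.
have x0 : x != 0 by apply/eqP => x0; apply: nx; rewrite x0; apply: gdom0.
apply: nx.
have -> : x = (x ^+ p) ^+ ((1 + a * k) %/ p) / (x ^+ k) ^+ a.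
  by rewrite -ex exprD expr1 -exprM mulnC mulfK // expf_neq0 // expf_neq0.
apply: dom_mul; first by apply: dom_pow; apply: dom_Fp; apply: Fp_pow.
by apply: dom_inv; apply: dom_pow.
Qed.

Lemma Dvanish r Dr v : polyG r Dr -> r.[x] = 0 -> Dr.[x] + (r^`()).[x] * v = 0.
Proof.
move=> hr rx.
have [h [r0 [hh hr0 e s0]]] := divL polyL_m m_monic (polyG_L hr).
have r0x : r0.[x] = 0.
  by have := congr1 (fun P => P.[x]) e; rewrite /= rx hornerD hornerM m_root mulr0 add0r.
have r00 : r0 = 0.
  apply: noroot => //; move: s0; rewrite size_XnsubC ?p_gt0 //.
rewrite r00 addr0 in e.
have [Dh hDh] := polyG_ex hh.
have hm0 : polyG m 0.
  move=> i; rewrite coef0 coefB coefXn coefC; apply: G_Fp.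
  apply: Fp_add; first by case: (i == p); [exact: Fp1 | exact: Fp0].
  by apply: Fp_neg; case: (i == 0); [exact: Fp_pow | exact: Fp0].
have hhm := polyG_mul hDh hm0.
rewrite -e in hhm.
have eD : Dr = Dh * m + h * 0.
  by apply/polyP => i; apply: G_fun (hr i) (hhm i).
have dm : m^`() = 0.
  rewrite derivB derivC subr0 derivXn.
  have hp' : p \in [pchar {poly F}] by rewrite pchar_poly.
  by rewrite -mulr_natr (pcharf0 hp') mulr0.
by rewrite eD e derivM dm !mulr0 !addr0 !hornerM m_root !mulr0 mul0r addr0.
Qed.

End Root.

Lemma extend x v : ~ gdom x -> exists G' : F -> F -> Prop,
  [/\ Good G', (forall a da, G a da -> G' a da) & G' x v].
Proof.
move=> nx.
pose G' z dz := exists q Dq, [/\ polyG q Dq, z = q.[x] & dz = Dq.[x] + (q^`()).[x] * v].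
have G'0 : G' 0 0.
  exists 0, 0; split; [by move=> i; rewrite coef0; apply: G0 | by rewrite horner0 |].
  by rewrite deriv0 !horner0 mul0r addr0.
exists G'; split; first split.
- move=> z y y' [q [Dq [hq -> ->]]] [q' [Dq' [hq' e ->]]].
  have hr := polyG_add hq (polyG_neg hq').
  have := Dvanish nx v hr; rewrite hornerD hornerN -e subrr => /(_ erefl).
  rewrite hornerD hornerN derivD derivN hornerD hornerN => h0.
  apply/eqP; rewrite -subr_eq0; apply/eqP; rewrite -[RHS]h0; ring.
- move=> y hy; exists y%:P, 0; split.
  + by have := polyG_C (G_Fp hy); rewrite polyC0.
  + by rewrite hornerC.
  + by rewrite derivC !horner0 mul0r addr0.
- move=> z dz y dy [q [Dq [hq -> ->]]] [r [Dr [hr -> ->]]].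
  exists (q + r), (Dq + Dr); split; [exact: polyG_add | by rewrite hornerD |].
  by rewrite !hornerD derivD hornerD; ring.
- move=> z dz y dy [q [Dq [hq -> ->]]] [r [Dr [hr -> ->]]].
  exists (q * r), (Dq * r + q * Dr); split; [exact: polyG_mul | by rewrite hornerM |].
  by rewrite derivM !hornerD !hornerM; ring.
split.
- move=> z dz [q [Dq [hq -> ->]]].
  exists (- q), (- Dq); split; [exact: polyG_neg | by rewrite hornerN |].
  by rewrite derivN !hornerN; ring.
move=> z dz [q [Dq [hq -> _]]].
have [z0|nz0] := eqVneq q.[x] 0.
  by exists 0; rewrite z0 invr0.
set c := (q.[x] ^+ p)^-1.
have hc : gdom c by apply: dom_Fp; apply: Fp_inv; apply: Fp_pow.
set qq := c%:P * q ^+ p.-1.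
have hqq : polyL qq by apply: polyL_mul; [apply: polyL_C | apply: polyL_exp; apply: polyG_L hq].
have [Dqq hDqq] := polyG_ex hqq.
exists (Dqq.[x] + (qq^`()).[x] * v), qq, Dqq; split => //.
rewrite /qq hornerCM horner_exp /c -{1}(prednK p_gt0) exprS invfM mulfVK //.
by rewrite expf_neq0.
- by move=> a da h; exists a%:P, da%:P; split; [exact: polyG_C | by rewrite hornerC | by rewrite hornerC derivC horner0 mul0r addr0].
by exists 'X, 0; split; [exact: polyG_X | by rewrite hornerX | by rewrite horner0 derivX hornerC mul1r add0r].
Qed.

End GoodG.
End Deriv.

Section Zorn.
Set Implicit Arguments. Unset Strict Implicit. Unset Printing Implicit Defensive.
Variable F : fieldType.
Variable p : nat.
Hypothesis hp : p \in [pchar F].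
Local Notation Fp := (@Fp F p).

Lemma exists_derivation (L0 : F -> Prop) (x0 : F) : subfield_closed L0 ->
  (forall y, Fp y -> L0 y) -> ~ L0 x0 ->
  exists D : F -> F, [/\ (forall a b, D (a + b) = D a + D b),
    (forall a b, D (a * b) = a * D b + b * D a),
    (forall a, L0 a -> D a = 0) & D x0 = 1].
Proof.
move=> [L00 L01 L0D L0N [L0M L0I]] L0Fp nL0.
pose G0 (a da : F) := L0 a /\ da = 0.
have gG0 : Good p G0.
  split.
  - by move=> x y y' [_ ->] [_ ->].
  - by move=> y hy; split => //; apply: L0Fp.
  - by move=> x dx y dy [hx ->] [hy ->]; split; [apply: L0D | rewrite addr0].
  - by move=> x dx y dy [hx ->] [hy ->]; split; [apply: L0M | rewrite !mulr0 addr0].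
  split.
  - by move=> x dx [hx ->]; split; [apply: L0N | rewrite oppr0].
  - by move=> x dx [hx _]; exists 0; split => //; apply: L0I.
have nd : ~ gdom G0 x0 by case=> y [].
have [G1 [gG1 sub01 G1x0]] := extend hp gG0 1 nd.
pose T := (F * F)%type.
pose P : (T -> Prop) -> Prop := fun S => S = (fun _ => False) \/
  (Good p (fun a b => S (a, b)) /\ forall a da, G1 a da -> S (a, da)).
have := @classical_sets.Zorn_bigcup T P.
case.
- move=> Fam subF tot.
  case: (classic (exists X, Fam X /\ exists t, X t)) => [[X0 [FX0 [t0 Xt0]]] | none]; last first.
    left; apply: functional_extensionality => t; apply: propositional_extensionality.
    by split => // -[X FX Xt]; apply: none; exists X; split => //; exists t.
  have key : forall X1 X2 t1 t2, Fam X1 -> Fam X2 -> X1 t1 -> X2 t2 ->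
      exists X, [/\ Fam X, Good p (fun a b => X (a, b)), X t1, X t2
                 & forall a da, G1 a da -> X (a, da)].
    move=> X1 X2 t1 t2 F1 F2 x1 x2.
    have [s12|s21] := tot X1 X2 F1 F2.
      case: (subF X2 F2) => [e|[g s]]; first by move: (s12 t1 x1); rewrite e.
      by exists X2; split => //; apply: s12.
    case: (subF X1 F1) => [e|[g s]]; first by move: x1; rewrite e.
    by exists X1; split => //; apply: s21.
  have [g0 s0] : Good p (fun a b => X0 (a, b)) /\ forall a da, G1 a da -> X0 (a, da).
    by case: (subF X0 FX0) => [e|//]; move: Xt0; rewrite e.
  right; split; last by move=> a da h; exists X0 => //; apply: s0.
  split.
  - move=> x y y' [X1 F1 h1] [X2 F2 h2].
    have [X [_ gX h1' h2' _]] := key _ _ _ _ F1 F2 h1 h2.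
    exact: (G_fun gX h1' h2').
  - move=> y hy; exists X0 => //; apply: s0; exact: (G_Fp gG1 hy).
  - move=> x dx y dy [X1 F1 h1] [X2 F2 h2].
    have [X [FX gX h1' h2' _]] := key _ _ _ _ F1 F2 h1 h2.
    by exists X => //; apply: (G_add gX h1' h2').
  - move=> x dx y dy [X1 F1 h1] [X2 F2 h2].
    have [X [FX gX h1' h2' _]] := key _ _ _ _ F1 F2 h1 h2.
    by exists X => //; apply: (G_mul gX h1' h2').
  split.
  - move=> x dx [X1 F1 h1].
    have [X [FX gX h1' _ _]] := key _ _ _ _ F1 F1 h1 h1.
    by exists X => //; apply: (G_neg gX h1').
  - move=> x dx [X1 F1 h1].
    have [X [FX gX h1' _ _]] := key _ _ _ _ F1 F1 h1 h1.
    have [w hw] := G_inv gX h1'.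
    by exists w; exists X.
move=> A [[->|[gA sA]] maxA].
  exfalso; apply: (maxA (fun t => G1 t.1 t.2)).
    split => //; move=> h; exact: (h (x0, 1) G1x0).
  by right; split.
have dA : forall x, gdom (fun a b => A (a, b)) x.
  move=> x; apply: NNPP => nx.
  have [G' [gG' s' G'x]] := extend hp gA 0 nx.
  apply: (maxA (fun t => G' t.1 t.2)).
    split; first by case=> a da h; apply: s'.
    by move=> h; apply: nx; exists 0; apply: (h (x, 0)).
  by right; split => // a da h; apply: s'; apply: sA.
pose D x := proj1_sig (constructive_indefinite_description _ (dA x)).
have hD x : A (x, D x) := proj2_sig (constructive_indefinite_description _ (dA x)).
exists D; split.
- move=> a b; apply: (G_fun gA (hD (a + b))); exact: (G_add gA (hD a) (hD b)).
- move=> a b; apply: (G_fun gA (hD (a * b))); exact: (G_mul gA (hD a) (hD b)).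
- by move=> a ha; apply: (G_fun gA (hD a)); apply: sA; apply: sub01.
- by apply: (G_fun gA (hD x0)); apply: sA.
Qed.

End Zorn.

Section Rec.
Set Implicit Arguments. Unset Strict Implicit. Unset Printing Implicit Defensive.
Variable F : fieldType.
Local Notation form := (Form F).
Variable k : nat.
Variable a : 'I_k -> F.
Variable D : 'I_k -> F -> F.
Hypothesis hDadd : forall j x y, D j (x + y) = D j x + D j y.
Hypothesis hDmul : forall j x y, D j (x * y) = x * D j y + y * D j x.
Hypothesis hDa : forall i j, D j (a i) = (i == j)%:R.

Definition ltI (i j : 'I_k) := (i < j)%N.
Lemma ltI_trans : transitive ltI. Proof. by move=> x y z; apply: ltn_trans. Qed.
Lemma ltI_irr : irreflexive ltI. Proof. by move=> x; apply: ltnn. Qed.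

Local Notation eL l w := (pre_q (map a l) w).

Lemma eL_ctr j l w : j \notin l ->
  eL l (ctr (D j) w) = (-1) ^+ (size l) *: ctr (D j) (eL l w).
Proof.
move=> jl; rewrite ctr_pre0.
  by rewrite size_map scalerA -expr2 sqrr_sign scale1r.
move=> x /mapP [i il ->]; rewrite hDa.
by case: eqP => // ij; move: jl; rewrite -ij il.
Qed.

Lemma rec (js : seq 'I_k) : sorted ltI js -> forall r t n (w : form),
  (r + t = size js + 1)%N -> homog n w ->
  (forall l : seq 'I_k, uniq l -> {subset l <= js} -> size l = r -> Zero (eL l w)) ->
  exists L : seq (seq 'I_k * form),
    (forall x, x \in L -> [/\ sorted ltI x.1, {subset x.1 <= js}, size x.1 = t
                              & homog (n - t) x.2]) /\
    eqv w (\sum_(x <- L) eL x.1 x.2).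
Proof.
elim: js => [|j js IH] sj r t n w rt hw hZ.
- case: r rt hZ => [|r] rt hZ.
    exists [::]; split => //; rewrite big_nil; apply/eqv0.
    by have := hZ [::] isT; rewrite /= pre_q_nil; apply=> // x; rewrite in_nil.
  have t0 : t = 0%N by move: rt; rewrite /= add0n; lia.
  exists [:: ([::], w)]; split.
    by move=> x; rewrite inE => /eqP -> /=; rewrite t0 subn0.
  by rewrite big_seq1 /= pre_q_nil; apply: eqv_refl.
case: t rt => [|t] rt.
  exists [:: ([::], w)]; split.
    by move=> x; rewrite inE => /eqP -> /=; rewrite subn0.
  by rewrite big_seq1 /= pre_q_nil; apply: eqv_refl.
case: r rt hZ => [|r] rt hZ.
  exists [::]; split => //; rewrite big_nil; apply/eqv0.
  by have := hZ [::] isT; rewrite /= pre_q_nil; apply=> // x; rewrite in_nil.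
have sj' : sorted ltI js by apply: path_sorted sj.
have jmin : all (ltI j) js by apply: order_path_min sj; apply: ltI_trans.
have njs : j \notin js.
  by apply/negP => /(allP jmin); rewrite /ltI ltnn.
set u := ctr (D j) w.
set v := w - pre_q [:: a j] u.
have ev : v = ctr (D j) (pre_q [:: a j] w).
  by rewrite ctr_pre hDa eqxx scale1r.
have hu : homog n.-1 u by apply: homog_ctr.
have hv : homog n v.
  by rewrite ev; have := homog_ctr (D := D j) (homog_pre_q (q := [:: a j]) hw).
have rt' : (r + t.+1 = size js + 1)%N by move: rt => /=; lia.
have rt'' : (r.+1 + t = size js + 1)%N by move: rt => /=; lia.
have hZv : forall l : seq 'I_k, uniq l -> {subset l <= js} -> size l = r -> Zero (eL l v).
  move=> l ul sl szl; rewrite ev eL_ctr; last by apply/negP => /sl; apply/negP.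
  apply: zero_scale; apply: Zero_ctr; [exact: hDadd | exact: hDmul |].
  rewrite pre_q_comp -[[:: a j]]/(map a [:: j]) -map_cat; apply: hZ.
  - rewrite cat_uniq ul /= orbF andbT; apply/negP => jl.
    by move: njs; rewrite (sl _ jl).
  - move=> x; rewrite mem_cat => /orP[/sl xjs|]; first by rewrite inE xjs orbT.
    by rewrite inE => /eqP ->; rewrite inE eqxx.
  - by rewrite size_cat szl addn1.
have [Lv [hLv ev']] := IH sj' r t.+1 n v rt' hv hZv.
have hZu : forall l : seq 'I_k, uniq l -> {subset l <= js} -> size l = r.+1 -> Zero (eL l u).
  move=> l ul sl szl; rewrite /u eL_ctr; last by apply/negP => /sl; apply/negP.
  apply: zero_scale; apply: Zero_ctr; [exact: hDadd | exact: hDmul |].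
  apply: hZ => // x /sl xjs; by rewrite inE xjs orbT.
have [Lu [hLu eu']] := IH sj' r.+1 t n.-1 u rt'' hu hZu.
exists (Lv ++ [seq (j :: x.1, x.2) | x <- Lu]); split.
  move=> x; rewrite mem_cat => /orP[/hLv [s1 s2 s3 s4]|/mapP [y /hLu [s1 s2 s3 s4] ->]].
    split => //; move=> z /s2 zjs; by rewrite inE zjs orbT.
  split => /=.
  - case: (y.1) s1 s2 => [|z l] s1 s2 //=; rewrite /= in s1; rewrite s1 andbT.
    by apply: (allP jmin); apply: s2; rewrite inE eqxx.
  - move=> z; rewrite inE => /orP[/eqP ->|/s2 zjs]; first by rewrite inE eqxx.
    by rewrite inE zjs orbT.
  - by rewrite s3.
  - by have -> : (n - t.+1 = n.-1 - t)%N by clear; lia.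
rewrite big_cat big_map /=.
have -> : w = pre_q [:: a j] u + v by rewrite /v addrC subrK.
rewrite addrC; apply: eqvD => //.
apply: eqv_trans (eqv_pre_q [:: a j] eu') _.
rewrite /pre_q raddf_sum /=; apply: eqv_eq; apply: eq_bigr => x _.
exact: (pre_q_comp [:: a j] (map a x.1) x.2).
Qed.

End Rec.

Section Final.
Set Implicit Arguments. Unset Strict Implicit. Unset Printing Implicit Defensive.
Variable F : fieldType.
Local Notation form := (Form F).
Variable p : nat.
Hypothesis hp : p \in [pchar F].

Lemma adjoin_subfield (C : F -> Prop) : subfield_closed (adjoin p C).
Proof.
split.
- by move=> L [] *.
- by move=> L [] *.
- by move=> x y hx hy L hL h1 h2; case: (hL) => _ _ hD _ _; apply: hD; [apply: hx | apply: hy].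
- by move=> x hx L hL h1 h2; case: (hL) => _ _ _ hN _; apply: hN; apply: hx.
split.
- by move=> x y hx hy L hL h1 h2; case: (hL) => _ _ _ _ [hM _]; apply: hM; [apply: hx | apply: hy].
- by move=> x hx L hL h1 h2; case: (hL) => _ _ _ _ [_ hI]; apply: hI; apply: hx.
Qed.

Lemma adjoin_Fp (C : F -> Prop) y : Fp p y -> adjoin p C y.
Proof. by move=> h L _ h1 _; apply: h1. Qed.
Lemma adjoin_C (C : F -> Prop) c : C c -> adjoin p C c.
Proof. by move=> h L _ _ h2; apply: h2. Qed.
Lemma adjoin_min (C L : F -> Prop) : subfield_closed L -> (forall y, Fp p y -> L y) ->
  (forall c, C c -> L c) -> forall x, adjoin p C x -> L x.
Proof. by move=> h1 h2 h3 x hx; apply: hx. Qed.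

Lemma adjoin_eq (C C' : F -> Prop) : (forall c, C c -> adjoin p C' c) ->
  (forall c, C' c -> adjoin p C c) -> adjoin p C = adjoin p C'.
Proof.
move=> h1 h2; apply: functional_extensionality => x; apply: propositional_extensionality.
split; apply: adjoin_min => //; try exact: adjoin_subfield; exact: adjoin_Fp.
Qed.

Lemma ext_Fp_uniq (L : F -> Prop) d1 d2 :
  ext_degree (Fp p) L d1 -> ext_degree (Fp p) L d2 -> d1 = d2.
Proof.
apply: ext_uniq; [exact: Fp0 hp | exact: Fp1 | exact: Fp_add hp | exact: Fp_neg hp | exact: Fp_mul].
Qed.

Lemma wedge_swap n (w : form) (s : seq F) : homog n w ->
  eqv (wedge w (dw s)) ((-1) ^+ (n * size s) *: wedge (dw s) w).
Proof.
move=> hw; have E := formE w; rewrite E wedge_suml wedge_sumr scaler_sumr.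
rewrite big_seq [X in eqv _ X]big_seq; apply: eqv_sum => z zd.
rewrite wedgeZl wedgeZr !wedge_dw scalerA mulrC -scalerA; apply: eqvZ.
by have := bswap [::] z s; rewrite /= (hw z zd).
Qed.

Lemma Zero_swap n (w : form) (s : seq F) : homog n w ->
  Zero (wedge w (dw s)) <-> Zero (pre_q s w).
Proof.
move=> hw; have e := wedge_swap s hw; rewrite -wedge_pre; split => h.
  have := zero_scale ((-1) ^+ (n * size s)) (Zero_eqv (eqv_sym e) h).
  by rewrite scalerA -expr2 sqrr_sign scale1r.
by apply: Zero_eqv e _; apply: zero_scale.
Qed.

Lemma Zero_wedge_q (q l : seq F) (v : form) : (forall z, ~~ uniq (q ++ z ++ l)) ->
  Zero (pre_q q (wedge v (dw l))).
Proof.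
move=> h; elim/form_ind: v => [|v1 v2 h1 h2|c z].
- by rewrite wedge0l pre_q0; exact: zero_0.
- by rewrite wedgeDl pre_qD; apply: zero_add.
by rewrite wedgeZl pre_qZ wedge_dw pre_q_dw; apply: zero_scale; apply: Zero_nuniq.
Qed.

End Final.

Section Final2.
Set Implicit Arguments. Unset Strict Implicit. Unset Printing Implicit Defensive.
Variable F : fieldType.
Local Notation form := (Form F).
Variable k : nat.
Variable a : 'I_k -> F.

Lemma sorted_enum_set (I : {set 'I_k}) : sorted (@ltI k) (enum I).
Proof.
rewrite /enum_mem; apply: sorted_filter; first exact: ltI_trans.
rewrite -enumT; have := iota_ltn_sorted 0 k; rewrite -val_enum_ord sorted_map.
by [].
Qed.

Lemma enum_set_sorted (l : seq 'I_k) : sorted (@ltI k) l -> enum [set i in l] = l.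
Proof.
move=> sl; apply: (irr_sorted_eq (@ltI_trans k) (@ltI_irr k)) => //.
  exact: sorted_enum_set.
by move=> i; rewrite mem_enum inE.
Qed.

Lemma regroup (L : seq (seq 'I_k * form)) t :
  (forall x, x \in L -> sorted (@ltI k) x.1 /\ size x.1 = t) ->
  \sum_(I : {set 'I_k} | #|I| == t)
     wedge (dw [seq a i | i <- enum I]) (\sum_(x <- L | enum I == x.1) x.2)
  = \sum_(x <- L) pre_q (map a x.1) x.2.
Proof.
elim: L => [|x L IH] hL.
  by rewrite big_nil big1 // => I _; rewrite big_nil wedge0r.
have hx := hL x (mem_head _ _).
rewrite big_cons -IH; last by move=> y yL; apply: hL; rewrite inE yL orbT.
transitivity (\sum_(I : {set 'I_k} | #|I| == t)
   ((if enum I == x.1 then pre_q (map a x.1) x.2 else 0) +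
    wedge (dw [seq a i | i <- enum I]) (\sum_(y <- L | enum I == y.1) y.2))).
  apply: eq_bigr => I _; rewrite big_cons; case: eqP => [->|_]; last by rewrite add0r.
  by rewrite wedgeDr wedge_pre.
rewrite big_split /=; congr (_ + _).
set I0 := [set i in x.1].
have eI0 : enum I0 = x.1 by apply: enum_set_sorted; case: hx.
have cI0 : #|I0| == t.
  case: hx => s1 s2; rewrite cardsE -s2; apply/eqP/card_uniqP.
  exact: sorted_uniq (@ltI_trans k) (@ltI_irr k) _ s1.
rewrite (bigD1 I0) //= eI0 eqxx big1 ?addr0 // => I /andP [_ nI].
case: eqP => // eI; case/negP: nI; apply/eqP/setP => i.
by rewrite -mem_enum eI -eI0 mem_enum.
Qed.

Lemma pig (u : seq F) : (forall y, y \in u -> exists i, y = a i) -> (k < size u)%N -> ~~ uniq u.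
Proof.
move=> h ks; apply/negP => uu.
have := uniq_leq_size uu (s2 := map a (enum 'I_k)).
rewrite size_map size_enum_ord => /(_ _) hh.
suff : (size u <= k)%N by rewrite leqNgt ks.
apply: hh => y /h [i ->]; apply: map_f; exact: mem_enum.
Qed.

End Final2.

Theorem proposition3p5 (F : fieldType) (p : nat) (hp : p \in [pchar F])
  (S : F -> Prop) (hS : exists s, S s) (k : nat) (hk : pdeg_eq p S k)
  (a : 'I_k -> F) (ha : p_basis p (adjoin p S) (fun x => exists i, x = a i))
  (n : nat) :
  (forall r : nat, (1 <= r <= k)%N ->
     forall w : Form F, homog n w ->
       (annihilates S r w <->
        exists eta : {set 'I_k} -> Form F,
          (forall I : {set 'I_k}, #|I| = (k - r + 1)%N ->
             OmegaZ (n%:Z - (k - r + 1)%N%:Z) (eta I)) /\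
          Zero (w - \sum_(I : {set 'I_k} | #|I| == (k - r + 1)%N)
                      wedge (dw [seq a i | i <- enum I]) (eta I))))
  /\
  (forall r : nat, (k < r)%N ->
     forall w : Form F, homog n w -> annihilates S r w).
Proof.
have pp := pcharf_prime hp; have p1 : (1 < p)%N := prime_gt1 pp.
case: ha => hAS hind hadj.
have AS : forall i, adjoin p S (a i) by move=> i; apply: hAS; exists i.
have SA : forall s, S s -> adjoin p (fun x => exists i, x = a i) s.
  by move=> s Ss; apply/hadj; apply: adjoin_C.
have hadjE : adjoin p (fun x => exists i, x = a i) = adjoin p S.
  apply: functional_extensionality => x; apply: propositional_extensionality; exact: hadj.
have inj : injective a.
  set s0 := undup (map a (enum 'I_k)).
  have s0A : forall x, x \in s0 -> exists i, x = a i.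
    by move=> x; rewrite mem_undup => /mapP [i _ ->]; exists i.
  have e0 := hind s0 (undup_uniq _) s0A.
  have eq : adjoin p (fun x => x \in s0) = adjoin p S.
    rewrite -hadjE; apply: adjoin_eq.
      by move=> c /s0A hc; apply: adjoin_C.
    move=> c [i ->]; apply: adjoin_C; rewrite mem_undup; apply: map_f; exact: mem_enum.
  rewrite eq in e0; have := ext_Fp_uniq hp e0 hk => /(expnI p1) es0.
  have u : uniq (map a (enum 'I_k)).
    by apply/negPn; rewrite -ltn_size_undup -/s0 es0 size_map size_enum_ord ltnn.
  move=> i j eij; apply: val_inj; apply: (uniqP (a i) u).
  - by rewrite inE size_map size_enum_ord ltn_ord.
  - by rewrite inE size_map size_enum_ord ltn_ord.
  have e1 := nth_ord_enum i i; have e2 := nth_ord_enum i j.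
  by rewrite (nth_map i) ?size_enum_ord ?ltn_ord // e1 (nth_map i) ?size_enum_ord ?ltn_ord // e2.
have hD : forall j, exists D : F -> F, [/\ (forall x y, D (x + y) = D x + D y),
    (forall x y, D (x * y) = x * D y + y * D x) & (forall i, D (a i) = (i == j)%:R)].
  move=> j; set sj := map a (filter (fun i => i != j) (enum 'I_k)).
  have usj : uniq sj by rewrite map_inj_uniq // filter_uniq // enum_uniq.
  have nj : a j \notin sj by rewrite mem_map // mem_filter eqxx.
  have sjA : forall x, x \in sj -> exists i, x = a i by move=> x /mapP [i _ ->]; exists i.
  have nL : ~ adjoin p (fun x => x \in sj) (a j).
    move=> h.
    have uj : uniq (a j :: sj) by rewrite /= nj usj.
    have e1 := hind (a j :: sj) uj.
    have e1' : ext_degree (@Fp F p) (adjoin p (fun x => x \in a j :: sj)) (p ^ size (a j :: sj)).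
      apply: e1 => x; rewrite inE => /orP[/eqP ->|/sjA //]; by exists j.
    have e2 := hind sj usj sjA.
    have eq : adjoin p (fun x => x \in a j :: sj) = adjoin p (fun x => x \in sj).
      apply: adjoin_eq.
        by move=> c; rewrite inE => /orP[/eqP ->|hc] //; apply: adjoin_C.
      by move=> c hc; apply: adjoin_C; rewrite inE hc orbT.
    rewrite eq in e1'; have := ext_Fp_uniq hp e1' e2 => /(expnI p1) /= /esym.
    exact: n_Sn.
  have [D [hDa hDm hD0 hD1]] := exists_derivation hp (adjoin_subfield p _)
                                  (fun y => @adjoin_Fp F p _ y) nL.
  exists D; split => // i; case: eqP => [->|ij] //; apply: hD0; apply: adjoin_C.
  by rewrite /sj map_f // mem_filter mem_enum andbT; apply/eqP.
pose D j := proj1_sig (constructive_indefinite_description _ (hD j)).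
have hDj : forall j, [/\ (forall x y, D j (x + y) = D j x + D j y),
    (forall x y, D j (x * y) = x * D j y + y * D j x) & (forall i, D j (a i) = (i == j)%:R)].
  by move=> j; exact: proj2_sig (constructive_indefinite_description _ (hD j)).
have hDadd : forall j x y, D j (x + y) = D j x + D j y by move=> j; case: (hDj j).
have hDmul : forall j x y, D j (x * y) = x * D j y + y * D j x by move=> j; case: (hDj j).
have hDa : forall i j, D j (a i) = (i == j)%:R by move=> i j; case: (hDj j).
have spanT0 : forall (T : F -> Prop) (u : seq F), (forall x, x \in u -> adjoin p T x) ->
    exists css : seq (F * seq F), (forall cl, cl \in css -> size cl.2 = size u /\
       forall y, y \in cl.2 -> T y) /\ eqv (dw u) (\sum_(cl <- css) cl.1 *: dw cl.2).
  move=> T u hu; have [css [h1 h2]] := span_list (fun x hx => adjoin_spanT hp (hu x hx)).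
  exists css; split => //; have := h2 [::] [::]; rewrite /= cats0 => e.
  by apply: eqv_trans e _; apply: eqv_eq; apply: eq_bigr => cl _; rewrite cats0.
have sk : sorted (@ltI k) (enum 'I_k).
  by have := iota_ltn_sorted 0 k; rewrite -val_enum_ord sorted_map.
split.
- move=> r /andP [r1 rk] w hw; set t := (k - r + 1)%N.
  have rt : (r + t = size (enum 'I_k) + 1)%N by rewrite size_enum_ord /t addnA subnKC.
  split.
  + move=> ann.
    have hZ : forall l : seq 'I_k, uniq l -> {subset l <= enum 'I_k} -> size l = r ->
        Zero (pre_q (map a l) w).
      move=> l _ _ sl.
      have [css [hc ec]] := spanT0 S (map a l) (fun x hx => ltac:(case/mapP: hx => i _ ->; exact: AS)).
      apply/(Zero_swap _ hw).
      apply: Zero_eqv (eqv_wedge (eqv_refl w) ec) _.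
      rewrite wedge_sumr big_seq; apply: Zero_sum => cl clc; rewrite wedgeZr; apply: zero_scale.
      have [s1 s2] := hc cl clc; apply: ann => //; by rewrite s1 size_map.
    have [L [hL eL]] := rec hDadd hDmul hDa sk rt hw hZ.
    have hL' : forall x, x \in L -> sorted (@ltI k) x.1 /\ size x.1 = t.
      by move=> x /hL [s1 _ s3 _].
    case: (leqP t n) => tn.
    * exists (fun I : {set 'I_k} => (\sum_(x <- L | enum I == x.1) x.2 : Form F)); split.
        move=> I _; rewrite subzn //.
        by rewrite big_seq_cond; apply: homog_sum => x /andP [/hL [_ _ _ h] _].
      apply: (Zero_eq eL); by rewrite -(regroup a hL').
    * exists (fun _ : {set 'I_k} => (0 : Form F)); split.
        by move=> I _; case: (_ - _)%R => [m|m] /=; [apply: homog0 | ].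
      rewrite big1 ?subr0; last by move=> I _; rewrite wedge0r.
      apply: (Zero_split (t := t) hw _ _ eL); last by rewrite ltn_eqF.
      rewrite big_seq; apply: homog_sum => x /hL [_ _ s3 h].
      have := homog_pre_q (q := map a x.1) h.
      by rewrite size_map s3 (_ : (n - t = 0)%N) ?addn0 //; apply/eqP; rewrite subn_eq0 ltnW.
  + move=> [eta [heta hZw]] s ss Ss.
    set X := \sum_(I : {set 'I_k} | #|I| == t) wedge (dw [seq a i | i <- enum I]) (eta I).
    have -> : w = (w - X) + X by rewrite subrK.
    rewrite wedgeDl; apply: zero_add; first exact: Zero_wedgel.
    rewrite /X wedge_suml; apply: Zero_sum => I /eqP cI.
    rewrite wedgeA wedge_pre.
    have [css [hc ec]] := spanT0 _ s (fun x hx => SA x (Ss x hx)).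
    apply: Zero_eqv (eqv_pre_q _ (eqv_wedge (eqv_refl (eta I)) ec)) _.
    rewrite wedge_sumr /pre_q raddf_sum /= big_seq; apply: Zero_sum => cl clc.
    rewrite -/(pre_q _ _) wedgeZr pre_qZ; apply: zero_scale.
    have [s1 s2] := hc cl clc.
    apply: Zero_wedge_q => z.
    have hpig : ~~ uniq ([seq a i | i <- enum I] ++ cl.2).
      apply: pig.
        move=> y; rewrite mem_cat => /orP[/mapP [i _ ->]|/s2 hy]; [by exists i | exact: hy].
      rewrite size_cat size_map -cardE cI s1 ss /t.
      by move: rk; clear; lia.
    apply: contra hpig => hu; apply: subseq_uniq hu.
    by rewrite subseq_cat2l; apply: suffix_subseq.
- move=> r kr w hw s ss Ss.
  have [css [hc ec]] := spanT0 _ s (fun x hx => SA x (Ss x hx)).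
  apply: Zero_eqv (eqv_wedge (eqv_refl w) ec) _.
  rewrite wedge_sumr big_seq; apply: Zero_sum => cl clc; rewrite wedgeZr; apply: zero_scale.
  have [s1 s2] := hc cl clc.
  have := @Zero_wedge_q F [::] cl.2 w; rewrite pre_q_nil; apply => z /=.
  have hpig : ~~ uniq cl.2 by apply: pig; [exact: s2 | rewrite s1 ss].
  by apply: contra hpig; rewrite cat_uniq => /and3P [].
Qed.
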